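(* Let $f:\Sigma\to\mathbb H^3$ be an extrinsically flat surface, $\mathcal W$ its set of umbilic points, and $\gamma$ an asymptotic curve contained in $\Sigma\setminus\mathcal W$, parametrized by arc length $t$ with respect to the induced metric. Then the mean curvature $H$ of $f$ does not vanish on $\gamma$ and satisfies $$\frac{d^2}{dt^2}\Big(\frac1{H(\gamma(t))}\Big)=\frac{1}{H(\gamma(t))}.$$
   Context: A surface in $\mathbb H^3$ is an immersion $f$ of a connected 2-manifold $\Sigma$ into the hyperbolic 3-space of curvature $-1$. With principal curvatures $k_1,k_2$, the extrinsic curvature is $K_{\rm ext}=k_1k_2$ and $H=(k_1+k_2)/2$; $f$ is extrinsically flat if $K_{\rm ext}\equiv0$. A point is umbilic if $k_1=k_2$. An asymptotic curve is a curve whose tangent lies in the kernel of the second fundamental form. *)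

(* Defs.v *)
(* classical reals. Local (chart) model of a surface in H^3,
   H^3 realised as the hyperboloid model in Minkowski space R^{3,1}. *)
From Stdlib Require Import Reals.
Open Scope R_scope.

Record v4 := mk4 { x0 : R; x1 : R; x2 : R; x3 : R }.

Definition vadd (p q : v4) : v4 :=
  mk4 (x0 p + x0 q) (x1 p + x1 q) (x2 p + x2 q) (x3 p + x3 q).
Definition vscal (a : R) (p : v4) : v4 :=
  mk4 (a * x0 p) (a * x1 p) (a * x2 p) (a * x3 p).
Definition vzero : v4 := mk4 0 0 0 0.

Definition mdot (p q : v4) : R :=
  - x0 p * x0 q + x1 p * x1 q + x2 p * x2 q + x3 p * x3 q.

Definition in_H3 (p : v4) : Prop := mdot p p = -1 /\ 0 < x0 p.

Definition open2 (U : R -> R -> Prop) : Prop :=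
  forall u v, U u v -> exists e, 0 < e /\
    forall u' v', Rabs (u' - u) < e -> Rabs (v' - v) < e -> U u' v'.

Definition continuous2 (U : R -> R -> Prop) (g : R -> R -> R) : Prop :=
  forall u v, U u v -> forall eps, 0 < eps -> exists d, 0 < d /\
    forall u' v', U u' v' -> Rabs (u' - u) < d -> Rabs (v' - v) < d ->
      Rabs (g u' v' - g u v) < eps.

Definition partial_u (U : R -> R -> Prop) (g gu : R -> R -> R) : Prop :=
  forall u v, U u v -> derivable_pt_lim (fun s => g s v) u (gu u v).
Definition partial_v (U : R -> R -> Prop) (g gv : R -> R -> R) : Prop :=
  forall u v, U u v -> derivable_pt_lim (fun s => g u s) v (gv u v).

Fixpoint Ck2 (k : nat) (U : R -> R -> Prop) (g : R -> R -> R) : Prop :=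
  match k with
  | O => continuous2 U g
  | S k' => continuous2 U g /\ exists gu gv,
      partial_u U g gu /\ partial_v U g gv /\ Ck2 k' U gu /\ Ck2 k' U gv
  end.

Definition smooth2 (U : R -> R -> Prop) (g : R -> R -> R) : Prop :=
  forall k, Ck2 k U g.

Definition vsmooth (U : R -> R -> Prop) (f : R -> R -> v4) : Prop :=
  smooth2 U (fun u v => x0 (f u v)) /\ smooth2 U (fun u v => x1 (f u v)) /\
  smooth2 U (fun u v => x2 (f u v)) /\ smooth2 U (fun u v => x3 (f u v)).

Definition vpartial_u (U : R -> R -> Prop) (f fu : R -> R -> v4) : Prop :=
  partial_u U (fun u v => x0 (f u v)) (fun u v => x0 (fu u v)) /\
  partial_u U (fun u v => x1 (f u v)) (fun u v => x1 (fu u v)) /\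
  partial_u U (fun u v => x2 (f u v)) (fun u v => x2 (fu u v)) /\
  partial_u U (fun u v => x3 (f u v)) (fun u v => x3 (fu u v)).
Definition vpartial_v (U : R -> R -> Prop) (f fv : R -> R -> v4) : Prop :=
  partial_v U (fun u v => x0 (f u v)) (fun u v => x0 (fv u v)) /\
  partial_v U (fun u v => x1 (f u v)) (fun u v => x1 (fv u v)) /\
  partial_v U (fun u v => x2 (f u v)) (fun u v => x2 (fv u v)) /\
  partial_v U (fun u v => x3 (f u v)) (fun u v => x3 (fv u v)).

Fixpoint Ck1 (k : nat) (a b : R) (g : R -> R) : Prop :=
  match k with
  | O => forall t, a < t < b -> continuity_pt g t
  | S k' => (forall t, a < t < b -> continuity_pt g t) /\ exists g',
      (forall t, a < t < b -> derivable_pt_lim g t (g' t)) /\ Ck1 k' a b g'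
  end.
Definition smooth1 (a b : R) (g : R -> R) : Prop := forall k, Ck1 k a b g.

Definition lin_indep (p q : v4) : Prop :=
  forall a c, vadd (vscal a p) (vscal c q) = vzero -> a = 0 /\ c = 0.

Definition unit_normal (x fu fv n : v4) : Prop :=
  mdot n n = 1 /\ mdot n x = 0 /\ mdot n fu = 0 /\ mdot n fv = 0.

Definition EE (fu fv : v4) := mdot fu fu.
Definition FF (fu fv : v4) := mdot fu fv.
Definition GG (fu fv : v4) := mdot fv fv.
(* In the hyperboloid
   model the Levi-Civita connection of H^3 differs from the flat derivative by a
   multiple of the position vector, which is orthogonal to n, so
   II(d_i, d_j) = <d_i d_j f, n>. *)
Definition LL (fuu n : v4) := mdot fuu n.
Definition MM (fuv n : v4) := mdot fuv n.
Definition NN (fvv n : v4) := mdot fvv n.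

Definition Kext (fu fv fuu fuv fvv n : v4) : R :=
  (LL fuu n * NN fvv n - MM fuv n ^ 2) / (EE fu fv * GG fu fv - FF fu fv ^ 2).

Definition Hmean (fu fv fuu fuv fvv n : v4) : R :=
  (EE fu fv * NN fvv n - 2 * FF fu fv * MM fuv n + GG fu fv * LL fuu n)
  / (2 * (EE fu fv * GG fu fv - FF fu fv ^ 2)).

Definition umbilic (fu fv fuu fuv fvv n : v4) : Prop :=
  exists lam, LL fuu n = lam * EE fu fv /\ MM fuv n = lam * FF fu fv /\
              NN fvv n = lam * GG fu fv.

Definition IIq (fuu fuv fvv n : v4) (du dv : R) : R :=
  LL fuu n * du ^ 2 + 2 * MM fuv n * du * dv + NN fvv n * dv ^ 2.
Definition Iq (fu fv : v4) (du dv : R) : R :=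
  EE fu fv * du ^ 2 + 2 * FF fu fv * du * dv + GG fu fv * dv ^ 2.

(* Main.v *)
Require Import Defs.
From Stdlib Require Import Reals Lra Psatz ClassicalEpsilon.
Open Scope R_scope.


Definition det3 a b c d e f g h i : R := a*(e*i - f*h) - b*(d*i - f*g) + c*(d*h - e*g).
Definition det4 (p q r s : v4) : R :=
  x0 p * det3 (x1 q) (x2 q) (x3 q) (x1 r) (x2 r) (x3 r) (x1 s) (x2 s) (x3 s)
- x1 p * det3 (x0 q) (x2 q) (x3 q) (x0 r) (x2 r) (x3 r) (x0 s) (x2 s) (x3 s)
+ x2 p * det3 (x0 q) (x1 q) (x3 q) (x0 r) (x1 r) (x3 r) (x0 s) (x1 s) (x3 s)
- x3 p * det3 (x0 q) (x1 q) (x2 q) (x0 r) (x1 r) (x2 r) (x0 s) (x1 s) (x2 s).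

Definition gram4 (p q r s : v4) : R :=
  let m := fun a b => mdot a b in
  det4 (mk4 (m p p) (m p q) (m p r) (m p s)) (mk4 (m q p) (m q q) (m q r) (m q s))
       (mk4 (m r p) (m r q) (m r r) (m r s)) (mk4 (m s p) (m s q) (m s r) (m s s)).

Lemma gram4_det p q r s : gram4 p q r s = - (det4 p q r s)^2.
Proof. destruct p, q, r, s. unfold gram4, det4, det3, mdot; simpl. ring. Qed.

Lemma mdot_sym p q : mdot p q = mdot q p.
Proof. unfold mdot; ring. Qed.

Lemma v4_ext p q : x0 p = x0 q -> x1 p = x1 q -> x2 p = x2 q -> x3 p = x3 q -> p = q.
Proof. destruct p, q; simpl; intros; subst; reflexivity. Qed.

Lemma cramer0 p q r s y :
  det4 p q r s * (- x0 y) =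
  det4 (mk4 (mdot p y) (x1 p) (x2 p) (x3 p)) (mk4 (mdot q y) (x1 q) (x2 q) (x3 q)) (mk4 (mdot r y) (x1 r) (x2 r) (x3 r)) (mk4 (mdot s y) (x1 s) (x2 s) (x3 s)).
Proof. destruct p, q, r, s, y. unfold det4, det3, mdot; simpl. ring. Qed.

Lemma cramer1 p q r s y :
  det4 p q r s * (x1 y) =
  det4 (mk4 (x0 p) (mdot p y) (x2 p) (x3 p)) (mk4 (x0 q) (mdot q y) (x2 q) (x3 q)) (mk4 (x0 r) (mdot r y) (x2 r) (x3 r)) (mk4 (x0 s) (mdot s y) (x2 s) (x3 s)).
Proof. destruct p, q, r, s, y. unfold det4, det3, mdot; simpl. ring. Qed.

Lemma cramer2 p q r s y :
  det4 p q r s * (x2 y) =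
  det4 (mk4 (x0 p) (x1 p) (mdot p y) (x3 p)) (mk4 (x0 q) (x1 q) (mdot q y) (x3 q)) (mk4 (x0 r) (x1 r) (mdot r y) (x3 r)) (mk4 (x0 s) (x1 s) (mdot s y) (x3 s)).
Proof. destruct p, q, r, s, y. unfold det4, det3, mdot; simpl. ring. Qed.

Lemma cramer3 p q r s y :
  det4 p q r s * (x3 y) =
  det4 (mk4 (x0 p) (x1 p) (x2 p) (mdot p y)) (mk4 (x0 q) (x1 q) (x2 q) (mdot q y)) (mk4 (x0 r) (x1 r) (x2 r) (mdot r y)) (mk4 (x0 s) (x1 s) (x2 s) (mdot s y)).
Proof. destruct p, q, r, s, y. unfold det4, det3, mdot; simpl. ring. Qed.

Lemma orth_zero p q r s y :
  gram4 p q r s <> 0 ->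
  mdot p y = 0 -> mdot q y = 0 -> mdot r y = 0 -> mdot s y = 0 -> y = vzero.
Proof.
  intros Hg Hp Hq Hr Hs.
  assert (Hd : det4 p q r s <> 0).
  { intro E. apply Hg. rewrite gram4_det, E. ring. }
  pose proof (cramer0 p q r s y) as C0.
  pose proof (cramer1 p q r s y) as C1.
  pose proof (cramer2 p q r s y) as C2.
  pose proof (cramer3 p q r s y) as C3.
  rewrite Hp, Hq, Hr, Hs in C0, C1, C2, C3.
  assert (E0 : det4 p q r s * (- x0 y) = 0) by (rewrite C0; unfold det4, det3; simpl; ring).
  assert (E1 : det4 p q r s * (x1 y) = 0) by (rewrite C1; unfold det4, det3; simpl; ring).
  assert (E2 : det4 p q r s * (x2 y) = 0) by (rewrite C2; unfold det4, det3; simpl; ring).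
  assert (E3 : det4 p q r s * (x3 y) = 0) by (rewrite C3; unfold det4, det3; simpl; ring).
  apply v4_ext; simpl.
  - destruct (Rmult_integral _ _ E0); [contradiction|lra].
  - destruct (Rmult_integral _ _ E1); [contradiction|auto].
  - destruct (Rmult_integral _ _ E2); [contradiction|auto].
  - destruct (Rmult_integral _ _ E3); [contradiction|auto].
Qed.

Lemma gram4_block p q r s :
  mdot p q = 0 -> mdot p r = 0 -> mdot p s = 0 -> mdot q r = 0 -> mdot q s = 0 ->
  gram4 p q r s = mdot p p * mdot q q * (mdot r r * mdot s s - mdot r s ^ 2).
Proof.
  intros H1 H2 H3 H4 H5. unfold gram4; cbv beta zeta.
  rewrite (mdot_sym q p), (mdot_sym r p), (mdot_sym s p), (mdot_sym r q),
    (mdot_sym s q), (mdot_sym s r), H1, H2, H3, H4, H5.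
  unfold det4, det3; simpl; ring.
Qed.

Lemma spacelike f x : mdot f f = -1 -> 0 < x0 f -> mdot x f = 0 ->
  0 <= mdot x x /\ (mdot x x = 0 -> x = vzero).
Proof.
  destruct f as [f0 f1 f2 f3], x as [y0 y1 y2 y3]; unfold mdot; simpl.
  intros Hf Hp Ho.
  assert (Hs : y0 * f0 = y1*f1+y2*f2+y3*f3) by lra.
  assert (Hl : (y1*y1+y2*y2+y3*y3)*(f1*f1+f2*f2+f3*f3) - (y1*f1+y2*f2+y3*f3)^2
     = (y1*f2-y2*f1)^2+(y1*f3-y3*f1)^2+(y2*f3-y3*f2)^2) by ring.
  assert (Hk : f0*f0*(-y0*y0+y1*y1+y2*y2+y3*y3) =
     (y1*y1+y2*y2+y3*y3) + ((y1*f2-y2*f1)^2+(y1*f3-y3*f1)^2+(y2*f3-y3*f2)^2)).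
  { transitivity (-(y0*f0)^2 + f0*f0*(y1*y1+y2*y2+y3*y3)); [ring|].
    rewrite Hs. replace (f0*f0) with (1 + (f1*f1+f2*f2+f3*f3)) by lra. ring. }
  assert (Hq : 0 <= -y0*y0+y1*y1+y2*y2+y3*y3).
  { assert (0 <= f0*f0*(-y0*y0+y1*y1+y2*y2+y3*y3)) by (rewrite Hk; pose proof (Rle_0_sqr y1); pose proof (Rle_0_sqr y2);
      pose proof (Rle_0_sqr y3); pose proof (pow2_ge_0 (y1*f2-y2*f1));
      pose proof (pow2_ge_0 (y1*f3-y3*f1)); pose proof (pow2_ge_0 (y2*f3-y3*f2));
      unfold Rsqr in *; lra).
    assert (0 < f0*f0) by nra.
    apply Rmult_le_reg_l with (f0*f0); lra. }
  split; [lra|]. intro Hz.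
  assert (H1 : y1*y1+y2*y2+y3*y3 = 0).
  { assert (f0*f0*(-y0*y0+y1*y1+y2*y2+y3*y3) = 0) by (rewrite Hz; ring).
    rewrite Hk in H. pose proof (Rle_0_sqr y1); pose proof (Rle_0_sqr y2);
      pose proof (Rle_0_sqr y3); pose proof (pow2_ge_0 (y1*f2-y2*f1));
      pose proof (pow2_ge_0 (y1*f3-y3*f1)); pose proof (pow2_ge_0 (y2*f3-y3*f2));
      unfold Rsqr in *; lra. }
  pose proof (Rle_0_sqr y1); pose proof (Rle_0_sqr y2);
      pose proof (Rle_0_sqr y3); unfold Rsqr in *.
  assert (Z1 : y1 * y1 = 0) by lra. assert (Z2 : y2 * y2 = 0) by lra. assert (Z3 : y3 * y3 = 0) by lra.
  assert (y1 = 0) by (destruct (Rmult_integral _ _ Z1); auto).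
  assert (y2 = 0) by (destruct (Rmult_integral _ _ Z2); auto).
  assert (y3 = 0) by (destruct (Rmult_integral _ _ Z3); auto).
  subst. assert (Hy : y0 * f0 = 0) by lra.
  assert (y0 = 0) by (destruct (Rmult_integral _ _ Hy); lra).
  subst; reflexivity.
Qed.

Definition vlin (a : R) (p : v4) (b : R) (q : v4) : v4 := vadd (vscal a p) (vscal b q).

Lemma mdot_vlin_l a p b q r : mdot (vlin a p b q) r = a * mdot p r + b * mdot q r.
Proof. unfold vlin, vadd, vscal, mdot; simpl; ring. Qed.
Lemma mdot_vlin_r a p b q r : mdot r (vlin a p b q) = a * mdot r p + b * mdot r q.
Proof. unfold vlin, vadd, vscal, mdot; simpl; ring. Qed.

Lemma D_pos f fu fv : mdot f f = -1 -> 0 < x0 f -> mdot fu f = 0 -> mdot fv f = 0 ->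
  lin_indep fu fv -> 0 < EE fu fv * GG fu fv - FF fu fv ^ 2.
Proof.
  intros Hf Hp Hu Hv Hli. unfold EE, FF, GG.
  assert (HG : 0 < mdot fv fv).
  { destruct (spacelike f fv Hf Hp Hv) as [H0 H1].
    destruct (Rle_lt_or_eq_dec _ _ H0) as [h|h]; auto.
    exfalso. specialize (H1 (eq_sym h)). subst fv.
    destruct (Hli 0 1) as [_ C]; [apply v4_ext; simpl; ring|lra]. }
  destruct (Rlt_or_le 0 (mdot fu fu * mdot fv fv - mdot fu fv ^ 2)) as [h|h]; auto.
  exfalso.
  set (z := vlin (mdot fv fv) fu (- mdot fu fv) fv).
  assert (Hz : mdot z f = 0) by (unfold z; rewrite mdot_vlin_l, Hu, Hv; ring).
  assert (Hzz : mdot z z = mdot fv fv * (mdot fu fu * mdot fv fv - mdot fu fv ^ 2)).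
  { unfold z. rewrite mdot_vlin_l, !mdot_vlin_r, (mdot_sym fv fu). ring. }
  destruct (spacelike f z Hf Hp Hz) as [H0 H1].
  assert (mdot z z = 0) by nra.
  specialize (H1 H). destruct (Hli (mdot fv fv) (- mdot fu fv)) as [C _].
  - exact H1.
  - lra.
Qed.

Lemma span2 f n fu fv y p q :
  mdot f f = -1 -> 0 < x0 f -> mdot fu f = 0 -> mdot fv f = 0 -> lin_indep fu fv ->
  mdot n n = 1 -> mdot n f = 0 -> mdot n fu = 0 -> mdot n fv = 0 ->
  mdot y f = 0 -> mdot y n = 0 -> mdot y fu = p -> mdot y fv = q ->
  let D := EE fu fv * GG fu fv - FF fu fv ^ 2 in
  y = vlin ((p * GG fu fv - q * FF fu fv) / D) fu ((q * EE fu fv - p * FF fu fv) / D) fv.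
Proof.
  intros Hf Hp Hu Hv Hli Hn Hnf Hnu Hnv Hyf Hyn Hyu Hyv D.
  assert (HD : 0 < D) by (apply D_pos with f; auto).
  set (w := vlin 1 y (-1) (vlin ((p * GG fu fv - q * FF fu fv) / D) fu ((q * EE fu fv - p * FF fu fv) / D) fv)).
  assert (Hw : w = vzero).
  { apply (orth_zero f n fu fv).
    - rewrite gram4_block; try assumption; try (rewrite mdot_sym; assumption).
      replace (mdot fu fu * mdot fv fv - mdot fu fv ^ 2) with D by (unfold D, EE, FF, GG; ring).
      rewrite Hf, Hn. lra.
    - unfold w. rewrite mdot_vlin_r, mdot_vlin_r, (mdot_sym f y), Hyf, (mdot_sym f fu), Hu,
        (mdot_sym f fv), Hv. ring.
    - unfold w. rewrite mdot_vlin_r, mdot_vlin_r, (mdot_sym n y), Hyn, Hnu, Hnv. ring.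
    - unfold w. rewrite mdot_vlin_r, mdot_vlin_r, (mdot_sym fu y), Hyu.
      unfold D in *; unfold EE, FF, GG in *. rewrite (mdot_sym fu fv). field. rewrite (mdot_sym fv fu); lra.
    - unfold w. rewrite mdot_vlin_r, mdot_vlin_r, (mdot_sym fv y), Hyv.
      unfold D in *; unfold EE, FF, GG in *. rewrite (mdot_sym fv fu). field. lra. }
  unfold w, vlin, vadd, vscal in Hw. injection Hw. intros E3 E2 E1 E0.
  apply v4_ext; unfold vlin, vadd, vscal; simpl; lra.
Qed.

Definition base_ok f fu fv n := mdot f f = -1 /\ 0 < x0 f /\ mdot fu f = 0 /\
  mdot fv f = 0 /\ lin_indep fu fv /\ mdot n n = 1 /\ mdot n f = 0 /\
  mdot n fu = 0 /\ mdot n fv = 0.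
Definition dn_ok f fu fv n nu nv L M N := mdot nu f = 0 /\ mdot nu n = 0 /\
  mdot nu fu = -L /\ mdot nu fv = -M /\ mdot nv f = 0 /\ mdot nv n = 0 /\
  mdot nv fu = -M /\ mdot nv fv = -N.

Definition wedge0 (x y : v4) := forall a b, mdot x a * mdot y b - mdot x b * mdot y a = 0.

Section Pt.
Variables f fu fv n nu nv : v4.
Variables L M N : R.
Hypothesis Hb : base_ok f fu fv n.
Hypothesis Hd : dn_ok f fu fv n nu nv L M N.
Let E := EE fu fv. Let F := FF fu fv. Let G := GG fu fv. Let D := E * G - F ^ 2.

Lemma pt_D : 0 < D.
Proof. destruct Hb as (?&?&?&?&?&?). apply D_pos with f; auto. Qed.

Lemma pt_nu : nu = vlin ((-L * G - - M * F) / D) fu ((-M * E - -L * F) / D) fv.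
Proof. destruct Hb as (?&?&?&?&?&?&?&?&?). destruct Hd as (?&?&?&?&?&?&?&?).
  apply span2 with f n; auto. Qed.
Lemma pt_nv : nv = vlin ((-M * G - - N * F) / D) fu ((-N * E - -M * F) / D) fv.
Proof. destruct Hb as (?&?&?&?&?&?&?&?&?). destruct Hd as (?&?&?&?&?&?&?&?).
  apply span2 with f n; auto. Qed.

Hypothesis Hflat : L * N = M ^ 2.

Lemma pt_wedge : wedge0 nu nv.
Proof.
  intros a b. pose proof pt_D. rewrite pt_nu, pt_nv, !mdot_vlin_l.
  set (p := mdot fu a); set (q := mdot fv a); set (r := mdot fu b); set (s := mdot fv b).
  set (a1 := (-L * G - - M * F) / D); set (b1 := (-M * E - -L * F) / D);
  set (a2 := (-M * G - - N * F) / D); set (b2 := (-N * E - -M * F) / D).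
  transitivity ((a1 * b2 - b1 * a2) * (p * s - r * q)); [ring|].
  replace (a1 * b2 - b1 * a2) with ((L * N - M^2) / D).
  - rewrite Hflat. unfold Rdiv. ring.
  - unfold a1, b1, a2, b2. unfold D. field. fold D. lra.
Qed.

Lemma pt_nunu : mdot nu nu = (G * L ^ 2 - 2 * F * L * M + E * M ^ 2) / D.
Proof.
  pose proof pt_D. destruct Hd as (?&?&Hu&Hv&?).
  rewrite pt_nu at 2. rewrite mdot_vlin_r, Hu, Hv. field. lra.
Qed.
Lemma pt_nvnv : mdot nv nv = (G * M ^ 2 - 2 * F * M * N + E * N ^ 2) / D.
Proof.
  pose proof pt_D. destruct Hd as (?&?&?&?&?&?&Hu&Hv).
  rewrite pt_nv at 2. rewrite mdot_vlin_r, Hu, Hv. field. lra.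
Qed.

Let Hm := (E * N - 2 * F * M + G * L) / (2 * D).

Lemma pt_H_L : L <> 0 -> mdot nu nu = 2 * Hm * L.
Proof.
  intro HL. pose proof pt_D. rewrite pt_nunu. unfold Hm.
  replace (E * M ^ 2) with (E * (L * N)) by (rewrite Hflat; ring).
  field. lra.
Qed.
Lemma pt_H_N : N <> 0 -> mdot nv nv = 2 * Hm * N.
Proof.
  intro HN. pose proof pt_D. rewrite pt_nvnv. unfold Hm.
  replace (G * M ^ 2) with (G * (L * N)) by (rewrite Hflat; ring).
  field. lra.
Qed.

Variables du dv : R.
Hypothesis HII : L * du ^ 2 + 2 * M * du * dv + N * dv ^ 2 = 0.

Lemma pt_ker : L * du + M * dv = 0 /\ M * du + N * dv = 0.
Proof.
  destruct (Req_dec L 0) as [HL|HL].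
  - assert (HM : M = 0) by (rewrite HL in Hflat; nra).
    rewrite HL, HM in *. split; [ring|].
    destruct (Req_dec N 0) as [HN|HN]; [rewrite HN; ring|].
    assert (dv ^ 2 = 0).
    { assert (N * dv ^ 2 = 0) by lra.
      destruct (Rmult_integral _ _ H); [contradiction|auto]. }
    assert (dv = 0) by nra. rewrite H0. ring.
  - assert (Hs : L * (L * du ^ 2 + 2 * M * du * dv + N * dv ^ 2) = (L * du + M * dv) ^ 2)
      by (transitivity ((L*du+M*dv)^2 + (L*N - M^2)*dv^2); [ring| rewrite Hflat; ring]).
    rewrite HII in Hs. assert (H1 : L * du + M * dv = 0) by nra.
    split; auto.
    apply Rmult_eq_reg_l with L; auto.
    replace (L * (M * du + N * dv)) with (M * (L * du) + (L * N) * dv) by ring.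
    rewrite Hflat. replace (L * du) with (- (M * dv)) by lra. ring.
Qed.

Lemma pt_dnX : vlin du nu dv nv = vzero.
Proof.
  destruct pt_ker as [K1 K2].
  rewrite pt_nu, pt_nv. pose proof pt_D.
  assert (e1 : du * ((-L * G - - M * F) / D) + dv * ((-M * G - - N * F) / D)
     = - (G * (L * du + M * dv) - F * (M * du + N * dv)) / D) by (field; lra).
  assert (e2 : du * ((-M * E - -L * F) / D) + dv * ((-N * E - -M * F) / D)
     = - (E * (M * du + N * dv) - F * (L * du + M * dv)) / D) by (field; lra).
  rewrite K1, K2 in e1, e2.
  transitivity (vlin (du * ((-L * G - - M * F) / D) + dv * ((-M * G - - N * F) / D)) fu
       (du * ((-M * E - -L * F) / D) + dv * ((-N * E - -M * F) / D)) fv).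
  - apply v4_ext; unfold vlin, vadd, vscal; simpl; ring.
  - rewrite e1, e2. apply v4_ext; unfold vlin, vadd, vscal; simpl; field; lra.
Qed.

End Pt.

Lemma pt_Tn (fu fv nu : v4) (L M du dv : R) :
  mdot nu fu = -L -> mdot nu fv = -M -> L * du + M * dv = 0 ->
  mdot (vlin du fu dv fv) nu = 0.
Proof. intros H1 H2 H3. rewrite mdot_vlin_l, (mdot_sym fu), (mdot_sym fv), H1, H2. lra. Qed.

Lemma pt_TT fu fv du dv : mdot (vlin du fu dv fv) (vlin du fu dv fv) = Iq fu fv du dv.
Proof. rewrite mdot_vlin_l, !mdot_vlin_r. unfold Iq, EE, FF, GG. rewrite (mdot_sym fv fu). ring. Qed.


Lemma dpl_val f x l l' : l = l' -> derivable_pt_lim f x l -> derivable_pt_lim f x l'.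
Proof. intros ->; auto. Qed.

Lemma dpl_local f g x l d : 0 < d -> (forall y, Rabs (y - x) < d -> f y = g y) ->
  derivable_pt_lim g x l -> derivable_pt_lim f x l.
Proof.
  intros Hd Hfg H eps Heps. destruct (H eps Heps) as [del Hdel].
  assert (Hm : 0 < Rmin del d) by (apply Rmin_pos; [apply cond_pos|auto]).
  exists (mkposreal _ Hm). intros h Hh Hlt. simpl in Hlt.
  rewrite (Hfg (x + h)), (Hfg x).
  - apply Hdel; auto. apply Rlt_le_trans with (1 := Hlt); apply Rmin_l.
  - replace (x - x) with 0 by ring. rewrite Rabs_R0; auto.
  - replace (x + h - x) with h by ring. apply Rlt_le_trans with (1 := Hlt); apply Rmin_r.
Qed.

Lemma open_u U u v : open2 U -> U u v -> exists e, 0 < e /\ forall y, Rabs (y - u) < e -> U y v.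
Proof.
  intros HU H. destruct (HU u v H) as [e [He Hb]]. exists e; split; auto.
  intros y Hy. apply Hb; auto. replace (v - v) with 0 by ring. rewrite Rabs_R0; auto.
Qed.
Lemma open_v U u v : open2 U -> U u v -> exists e, 0 < e /\ forall y, Rabs (y - v) < e -> U u y.
Proof.
  intros HU H. destruct (HU u v H) as [e [He Hb]]. exists e; split; auto.
  intros y Hy. apply Hb; auto. replace (u - u) with 0 by ring. rewrite Rabs_R0; auto.
Qed.

Lemma pu_ext U g g' gu gu' : open2 U -> (forall u v, U u v -> g u v = g' u v) ->
  (forall u v, U u v -> gu u v = gu' u v) -> partial_u U g gu -> partial_u U g' gu'.
Proof.
  intros HU Hg Hgu H u v Huv. rewrite <- Hgu by auto.
  destruct (open_u U u v HU Huv) as [e [He Hb]].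
  apply dpl_local with (fun s => g s v) e; auto.
  intros y Hy. symmetry. apply Hg, Hb; auto.
Qed.
Lemma pv_ext U g g' gv gv' : open2 U -> (forall u v, U u v -> g u v = g' u v) ->
  (forall u v, U u v -> gv u v = gv' u v) -> partial_v U g gv -> partial_v U g' gv'.
Proof.
  intros HU Hg Hgv H u v Huv. rewrite <- Hgv by auto.
  destruct (open_v U u v HU Huv) as [e [He Hb]].
  apply dpl_local with (fun s => g u s) e; auto.
  intros y Hy. symmetry. apply Hg, Hb; auto.
Qed.

Lemma cont_ext U g g' : (forall u v, U u v -> g u v = g' u v) ->
  continuous2 U g -> continuous2 U g'.
Proof.
  intros Hg H u v Huv eps Heps. destruct (H u v Huv eps Heps) as [d [Hd Hb]].
  exists d; split; auto. intros u' v' H' H1 H2. rewrite <- !Hg by auto. apply Hb; auto.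
Qed.

Lemma Ck2_ext k : forall U g g', open2 U -> (forall u v, U u v -> g u v = g' u v) ->
  Ck2 k U g -> Ck2 k U g'.
Proof.
  induction k as [|k IH]; simpl; intros U g g' HU Hg H.
  - eapply cont_ext; eauto.
  - destruct H as [Hc [gu [gv [Hu [Hv [H1 H2]]]]]]. split; [eapply cont_ext; eauto|].
    exists gu, gv. split; [|split]; auto.
    + apply pu_ext with g gu; auto.
    + apply pv_ext with g gv; auto.
Qed.

Lemma pu_uniq U g g1 g2 u v : partial_u U g g1 -> partial_u U g g2 -> U u v -> g1 u v = g2 u v.
Proof. intros H1 H2 H. eapply uniqueness_limite; eauto. Qed.
Lemma pv_uniq U g g1 g2 u v : partial_v U g g1 -> partial_v U g g2 -> U u v -> g1 u v = g2 u v.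
Proof. intros H1 H2 H. eapply uniqueness_limite; eauto. Qed.

Lemma smooth_pu U g gu : open2 U -> smooth2 U g -> partial_u U g gu -> smooth2 U gu.
Proof.
  intros HU Hs Hu k. destruct (Hs (S k)) as [_ [gu' [gv' [Hu' [_ [Hk _]]]]]].
  apply Ck2_ext with gu'; auto. intros u v H. eapply pu_uniq; eauto.
Qed.
Lemma smooth_pv U g gv : open2 U -> smooth2 U g -> partial_v U g gv -> smooth2 U gv.
Proof.
  intros HU Hs Hv k. destruct (Hs (S k)) as [_ [gu' [gv' [_ [Hv' [_ Hk]]]]]].
  apply Ck2_ext with gv'; auto. intros u v H. eapply pv_uniq; eauto.
Qed.
Lemma smooth_ex_pu U g : smooth2 U g -> exists gu, partial_u U g gu.
Proof. intros Hs. destruct (Hs 1%nat) as [_ [gu [_ [H _]]]]. eauto. Qed.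
Lemma smooth_ex_pv U g : smooth2 U g -> exists gv, partial_v U g gv.
Proof. intros Hs. destruct (Hs 1%nat) as [_ [_ [gv [_ [H _]]]]]. eauto. Qed.
Lemma smooth_cont U g : smooth2 U g -> continuous2 U g.
Proof. intros Hs. exact (Hs 0%nat). Qed.

Lemma pu_uniq_ext U g g' gu gu' u v : open2 U -> (forall u v, U u v -> g u v = g' u v) ->
  partial_u U g gu -> partial_u U g' gu' -> U u v -> gu u v = gu' u v.
Proof.
  intros HU Hg H1 H2 H. apply pu_uniq with U g'; auto.
  apply pu_ext with g gu; auto.
Qed.
Lemma pv_uniq_ext U g g' gv gv' u v : open2 U -> (forall u v, U u v -> g u v = g' u v) ->
  partial_v U g gv -> partial_v U g' gv' -> U u v -> gv u v = gv' u v.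
Proof.
  intros HU Hg H1 H2 H. apply pv_uniq with U g'; auto.
  apply pv_ext with g gv; auto.
Qed.

Lemma pu_zero U g gu u v : open2 U -> (forall u v, U u v -> g u v = 0) ->
  partial_u U g gu -> U u v -> gu u v = 0.
Proof.
  intros HU Hg H Huv. apply (pu_uniq_ext U g (fun _ _ => 0) gu (fun _ _ => 0)); auto.
  intros a b _. apply derivable_pt_lim_const.
Qed.
Lemma pv_zero U g gv u v : open2 U -> (forall u v, U u v -> g u v = 0) ->
  partial_v U g gv -> U u v -> gv u v = 0.
Proof.
  intros HU Hg H Huv. apply (pv_uniq_ext U g (fun _ _ => 0) gv (fun _ _ => 0)); auto.
  intros a b _. apply derivable_pt_lim_const.
Qed.

Definition vd (X : R -> v4) (t : R) (D : v4) : Prop :=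
  derivable_pt_lim (fun s => x0 (X s)) t (x0 D) /\
  derivable_pt_lim (fun s => x1 (X s)) t (x1 D) /\
  derivable_pt_lim (fun s => x2 (X s)) t (x2 D) /\
  derivable_pt_lim (fun s => x3 (X s)) t (x3 D).

Lemma vd_mdot X Y t DX DY : vd X t DX -> vd Y t DY ->
  derivable_pt_lim (fun s => mdot (X s) (Y s)) t (mdot DX (Y t) + mdot (X t) DY).
Proof.
  intros (A0&A1&A2&A3) (B0&B1&B2&B3).
  pose proof (derivable_pt_lim_mult _ _ _ _ _ A0 B0) as M0.
  pose proof (derivable_pt_lim_mult _ _ _ _ _ A1 B1) as M1.
  pose proof (derivable_pt_lim_mult _ _ _ _ _ A2 B2) as M2.
  pose proof (derivable_pt_lim_mult _ _ _ _ _ A3 B3) as M3.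
  pose proof (derivable_pt_lim_opp _ _ _ M0) as N0.
  pose proof (derivable_pt_lim_plus _ _ _ _ _ (derivable_pt_lim_plus _ _ _ _ _
     (derivable_pt_lim_plus _ _ _ _ _ N0 M1) M2) M3) as S.
  eapply dpl_val; [|eapply (dpl_local _ _ _ _ 1); [lra| |exact S]].
  - unfold mdot; ring.
  - intros y _. unfold mdot, plus_fct, mult_fct, opp_fct. ring.
Qed.

Lemma vd_const_mdot X t DX a : vd X t DX ->
  derivable_pt_lim (fun s => mdot (X s) a) t (mdot DX a).
Proof.
  intros H. eapply dpl_val; [|apply (vd_mdot X (fun _ => a) t DX vzero); auto].
  - unfold mdot, vzero; simpl; ring.
  - repeat split; apply derivable_pt_lim_const.
Qed.

Lemma pu_mdot U x y xu yu : vpartial_u U x xu -> vpartial_u U y yu ->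
  partial_u U (fun u v => mdot (x u v) (y u v))
    (fun u v => mdot (xu u v) (y u v) + mdot (x u v) (yu u v)).
Proof.
  intros (A0&A1&A2&A3) (B0&B1&B2&B3) u v H.
  apply (vd_mdot (fun s => x s v) (fun s => y s v) u (xu u v) (yu u v)).
  - repeat split; [apply A0|apply A1|apply A2|apply A3]; auto.
  - repeat split; [apply B0|apply B1|apply B2|apply B3]; auto.
Qed.
Lemma pv_mdot U x y xv yv : vpartial_v U x xv -> vpartial_v U y yv ->
  partial_v U (fun u v => mdot (x u v) (y u v))
    (fun u v => mdot (xv u v) (y u v) + mdot (x u v) (yv u v)).
Proof.
  intros (A0&A1&A2&A3) (B0&B1&B2&B3) u v H.
  apply (vd_mdot (fun s => x u s) (fun s => y u s) v (xv u v) (yv u v)).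
  - repeat split; [apply A0|apply A1|apply A2|apply A3]; auto.
  - repeat split; [apply B0|apply B1|apply B2|apply B3]; auto.
Qed.
Lemma pu_mdotc U x xu a : vpartial_u U x xu ->
  partial_u U (fun u v => mdot (x u v) a) (fun u v => mdot (xu u v) a).
Proof.
  intros (A0&A1&A2&A3) u v H.
  apply (vd_const_mdot (fun s => x s v) u (xu u v) a).
  repeat split; [apply A0|apply A1|apply A2|apply A3]; auto.
Qed.
Lemma pu_mult U g1 g2 h1 h2 : partial_u U g1 h1 -> partial_u U g2 h2 ->
  partial_u U (fun u v => g1 u v * g2 u v) (fun u v => h1 u v * g2 u v + g1 u v * h2 u v).
Proof. intros H1 H2 u v H. exact (derivable_pt_lim_mult _ _ _ _ _ (H1 u v H) (H2 u v H)). Qed.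
Lemma pu_minus U g1 g2 h1 h2 : partial_u U g1 h1 -> partial_u U g2 h2 ->
  partial_u U (fun u v => g1 u v - g2 u v) (fun u v => h1 u v - h2 u v).
Proof. intros H1 H2 u v H. exact (derivable_pt_lim_minus _ _ _ _ _ (H1 u v H) (H2 u v H)). Qed.
Lemma pu_plus U g1 g2 h1 h2 : partial_u U g1 h1 -> partial_u U g2 h2 ->
  partial_u U (fun u v => g1 u v + g2 u v) (fun u v => h1 u v + h2 u v).
Proof. intros H1 H2 u v H. exact (derivable_pt_lim_plus _ _ _ _ _ (H1 u v H) (H2 u v H)). Qed.

Lemma schwarz U g gu gv guv gvu u v : open2 U -> partial_u U g gu -> partial_v U g gv ->
  partial_v U gu guv -> partial_u U gv gvu -> continuous2 U guv -> continuous2 U gvu ->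
  U u v -> guv u v = gvu u v.
Proof.
  intros HU Hu Hv Huv Hvu C1 C2 H.
  destruct (HU u v H) as [e [He Hb]].
  assert (key : forall h, 0 < h -> h < e -> exists a b a' b',
     u < a < u + h /\ v < b < v + h /\ u < a' < u + h /\ v < b' < v + h /\
     guv a b = gvu a' b').
  { intros h Hh Hhe.
    assert (Bx : forall s s', u <= s <= u + h -> v <= s' <= v + h -> U s s').
    { intros s s' [? ?] [? ?]. apply Hb; apply Rabs_def1; lra. }
    destruct (MVT_cor2 (fun s => g s (v + h) - g s v) (fun s => gu s (v+h) - gu s v) u (u + h))
      as [a [Ea Ia]]; [lra| |].
    { intros c Hc. apply derivable_pt_lim_minus; [apply Hu|apply Hu]; apply Bx; lra. }
    destruct (MVT_cor2 (fun s => gu a s) (fun s => guv a s) v (v + h)) as [b [Eb Ib]]; [lra| |].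
    { intros c Hc. apply Huv. apply Bx; lra. }
    destruct (MVT_cor2 (fun s => g (u + h) s - g u s) (fun s => gv (u+h) s - gv u s) v (v + h))
      as [b' [Eb' Ib']]; [lra| |].
    { intros c Hc. apply derivable_pt_lim_minus; [apply Hv|apply Hv]; apply Bx; lra. }
    destruct (MVT_cor2 (fun s => gv s b') (fun s => gvu s b') u (u + h)) as [a' [Ea' Ia']]; [lra| |].
    { intros c Hc. apply Hvu. apply Bx; lra. }
    exists a, b, a', b'. repeat split; try lra.
    assert (E1 : guv a b * (h * h) = gvu a' b' * (h * h)).
    { replace (u + h - u) with h in * by ring. replace (v + h - v) with h in * by ring.
      transitivity ((gu a (v + h) - gu a v) * h); [rewrite Eb; ring|].
      transitivity ((gv (u + h) b' - gv u b') * h); [|rewrite Ea'; ring].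
      rewrite <- Ea, <- Eb'. ring. }
    apply Rmult_eq_reg_r with (h * h); auto. nra. }
  destruct (Req_dec (guv u v - gvu u v) 0) as [Z|Z]; [lra|exfalso].
  set (eps := Rabs (guv u v - gvu u v) / 4).
  assert (Heps : 0 < eps) by (unfold eps; apply Rabs_pos_lt in Z; lra).
  destruct (C1 u v H eps Heps) as [d1 [Hd1 B1]].
  destruct (C2 u v H eps Heps) as [d2 [Hd2 B2]].
  set (h := Rmin e (Rmin d1 d2) / 2).
  assert (Hm : 0 < Rmin e (Rmin d1 d2)) by (repeat apply Rmin_pos; auto).
  assert (Hh1 : h <= e / 2) by (unfold h; pose proof (Rmin_l e (Rmin d1 d2)); lra).
  assert (Hh2 : h <= d1 / 2) by (unfold h; pose proof (Rmin_r e (Rmin d1 d2)); pose proof (Rmin_l d1 d2); lra).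
  assert (Hh3 : h <= d2 / 2) by (unfold h; pose proof (Rmin_r e (Rmin d1 d2)); pose proof (Rmin_r d1 d2); lra).
  destruct (key h) as (a & b & a' & b' & Ia & Ib & Ia' & Ib' & Eq); [unfold h; lra|lra|].
  assert (Ua : U a b) by (apply Hb; apply Rabs_def1; lra).
  assert (Ua' : U a' b') by (apply Hb; apply Rabs_def1; lra).
  specialize (B1 a b Ua). specialize (B2 a' b' Ua').
  assert (R1 : Rabs (guv a b - guv u v) < eps) by (apply B1; apply Rabs_def1; lra).
  assert (R2 : Rabs (gvu a' b' - gvu u v) < eps) by (apply B2; apply Rabs_def1; lra).
  rewrite Eq in R1.
  apply Rabs_def2 in R1. apply Rabs_def2 in R2.
  assert (Hx : Rabs (guv u v - gvu u v) < 2 * eps) by (apply Rabs_def1; lra).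
  unfold eps in Hx. pose proof (Rabs_pos (guv u v - gvu u v)). lra.
Qed.

Lemma dpl_to_lim f x l : derivable_pt_lim f x l ->
  limit1_in (fun h => (f (x + h) - f x) / h) (fun h => h <> 0) l 0.
Proof.
  intros H eps Heps. destruct (H eps Heps) as [d Hd]. exists d. split; [apply cond_pos|].
  intros h [Hh Hlt]. simpl in *. unfold Rdist in *. replace (h - 0) with h in Hlt by ring.
  apply Hd; auto.
Qed.
Lemma lim_to_dpl f x l :
  limit1_in (fun h => (f (x + h) - f x) / h) (fun h => h <> 0) l 0 -> derivable_pt_lim f x l.
Proof.
  intros H eps Heps. destruct (H eps Heps) as [d [Hd Hb]].
  exists (mkposreal d Hd). intros h Hh Hlt. simpl in *.
  specialize (Hb h). simpl in Hb. unfold Rdist in Hb. apply Hb. split; auto.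
  replace (h - 0) with h by ring. auto.
Qed.
Lemma lim_ext f g D l x0 : (forall x, D x -> f x = g x) -> limit1_in f D l x0 -> limit1_in g D l x0.
Proof.
  intros He H eps Heps. destruct (H eps Heps) as [d [Hd Hb]]. exists d; split; auto.
  intros x [Dx Hx]. rewrite <- He by auto. apply Hb; auto.
Qed.

Lemma dpl_cont f x l : derivable_pt_lim f x l ->
  forall eps, 0 < eps -> exists d, 0 < d /\ forall h, Rabs h < d -> Rabs (f (x + h) - f x) < eps.
Proof.
  intros H eps Heps. destruct (H 1 Rlt_0_1) as [del Hdel].
  assert (Hl : 0 < Rabs l + 1) by (pose proof (Rabs_pos l); lra).
  exists (Rmin del (eps / (Rabs l + 1))). split.
  { apply Rmin_pos; [apply cond_pos|]. apply Rdiv_lt_0_compat; auto. }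
  intros h Hh. destruct (Req_dec h 0) as [->|Hz].
  { replace (x + 0) with x by ring. replace (f x - f x) with 0 by ring. rewrite Rabs_R0; auto. }
  assert (H1 : Rabs h < del) by (apply Rlt_le_trans with (1 := Hh); apply Rmin_l).
  assert (H2 : Rabs h < eps / (Rabs l + 1)) by (apply Rlt_le_trans with (1 := Hh); apply Rmin_r).
  specialize (Hdel h Hz H1).
  replace (f (x + h) - f x) with (((f (x + h) - f x) / h - l) * h + l * h) by (field; auto).
  eapply Rle_lt_trans; [apply Rabs_triang|]. rewrite !Rabs_mult.
  assert (Rabs h * (Rabs l + 1) < eps).
  { apply Rmult_lt_reg_r with (/ (Rabs l + 1)). apply Rinv_0_lt_compat; auto.
    rewrite Rmult_assoc, Rinv_r by lra. rewrite Rmult_1_r. auto. }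
  pose proof (Rabs_pos h). pose proof (Rabs_pos ((f (x + h) - f x) / h - l)).
  pose proof (Rabs_pos l). nra.
Qed.

Lemma mvt_ratio (phi dphi : R -> R) (x y : R) : x <> y ->
  (forall s, Rmin x y <= s <= Rmax x y -> derivable_pt_lim phi s (dphi s)) ->
  exists c, Rmin x y < c < Rmax x y /\ (phi y - phi x) / (y - x) = dphi c.
Proof.
  intros Hxy Hd. destruct (Rlt_or_le x y) as [h|h].
  - rewrite Rmin_left, Rmax_right in * by lra.
    destruct (MVT_cor2 phi dphi x y h Hd) as [c [E I]]. exists c; split; auto.
    rewrite E. field. lra.
  - assert (y < x) by (destruct h; auto; congruence).
    rewrite Rmin_right, Rmax_left in * by lra.
    destruct (MVT_cor2 phi dphi y x H Hd) as [c [E I]]. exists c; split; auto.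
    replace ((phi y - phi x) / (y - x)) with ((phi x - phi y) / (x - y)) by (field; lra).
    rewrite E. field. lra.
Qed.

Lemma chain U g gu gv cu cv t0 du dv : open2 U -> partial_u U g gu -> partial_v U g gv ->
  continuous2 U gu -> U (cu t0) (cv t0) ->
  derivable_pt_lim cu t0 du -> derivable_pt_lim cv t0 dv ->
  derivable_pt_lim (fun t => g (cu t) (cv t)) t0
    (gu (cu t0) (cv t0) * du + gv (cu t0) (cv t0) * dv).
Proof.
  intros HU Hu Hv Cu H0 Du Dv.
  set (u0 := cu t0) in *. set (v0 := cv t0) in *.
  destruct (HU u0 v0 H0) as [e [He Hb]].
  set (Q := fun h => if Req_dec_T (cu (t0 + h)) u0 then gu u0 (cv (t0 + h)) else
     (g (cu (t0 + h)) (cv (t0 + h)) - g u0 (cv (t0 + h))) / (cu (t0 + h) - u0)).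
  set (A := fun h => (cu (t0 + h) - cu t0) / h).
  set (B := fun h => (g u0 (cv (t0 + h)) - g u0 (cv t0)) / h).
  apply lim_to_dpl.
  apply lim_ext with (fun h => Q h * A h + B h).
  { intros h Hh. unfold Q, A, B. fold u0 v0.
    destruct (Req_dec_T (cu (t0 + h)) u0) as [E|E].
    - rewrite E. unfold Rminus. rewrite Rplus_opp_r. field; auto.
    - field. split; auto. intro Z. apply E. lra. }
  apply limit_plus; [apply limit_mul|].
  -
    intros eps Heps. destruct (Cu u0 v0 H0 eps Heps) as [d1 [Hd1 B1]].
    set (d := Rmin d1 e).
    assert (Hd : 0 < d) by (apply Rmin_pos; auto).
    assert (Hdd1 : d <= d1) by apply Rmin_l. assert (Hde : d <= e) by apply Rmin_r.
    destruct (dpl_cont cu t0 du Du d Hd) as [a1 [Ha1 Ca]].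
    destruct (dpl_cont cv t0 dv Dv d Hd) as [a2 [Ha2 Cb]].
    exists (Rmin a1 a2). split; [apply Rmin_pos; auto|].
    intros h [Hh Hlt]. change R in h. change (Rdist h 0 < Rmin a1 a2) in Hlt.
    change (Rdist (Q h) (gu u0 v0) < eps). unfold Rdist in Hlt |- *. replace (h - 0) with h in Hlt by ring.
    assert (Ea : Rabs (cu (t0 + h) - u0) < d) by (apply Ca; eapply Rlt_le_trans; [exact Hlt|apply Rmin_l]).
    assert (Eb : Rabs (cv (t0 + h) - v0) < d) by (apply Cb; eapply Rlt_le_trans; [exact Hlt|apply Rmin_r]).
    apply Rabs_def2 in Ea. apply Rabs_def2 in Eb.
    unfold Q. destruct (Req_dec_T (cu (t0 + h)) u0) as [E|E].
    + apply B1.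
      * apply Hb; apply Rabs_def1; lra.
      * replace (u0 - u0) with 0 by ring. rewrite Rabs_R0; lra.
      * apply Rabs_def1; lra.
    + destruct (mvt_ratio (fun s => g s (cv (t0 + h))) (fun s => gu s (cv (t0 + h))) u0 (cu (t0 + h)))
        as [c [Ic Ec]]; auto.
      { intros s Hs. apply Hu. apply Hb; apply Rabs_def1.
        all: pose proof (Rmin_l u0 (cu (t0+h))); pose proof (Rmin_r u0 (cu (t0+h)));
             pose proof (Rmax_l u0 (cu (t0+h))); pose proof (Rmax_r u0 (cu (t0+h))).
        all: assert (Rmin u0 (cu (t0 + h)) = u0 \/ Rmin u0 (cu (t0 + h)) = cu (t0+h)) by
               (unfold Rmin; destruct (Rle_dec u0 (cu (t0+h))); auto).
        all: assert (Rmax u0 (cu (t0 + h)) = u0 \/ Rmax u0 (cu (t0 + h)) = cu (t0+h)) by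
               (unfold Rmax; destruct (Rle_dec u0 (cu (t0+h))); auto).
        all: lra. }
      simpl in Ec. rewrite Ec.
      pose proof (Rmin_l u0 (cu (t0+h))); pose proof (Rmin_r u0 (cu (t0+h)));
      pose proof (Rmax_l u0 (cu (t0+h))); pose proof (Rmax_r u0 (cu (t0+h))).
      assert (Rmin u0 (cu (t0 + h)) = u0 \/ Rmin u0 (cu (t0 + h)) = cu (t0+h)) by
               (unfold Rmin; destruct (Rle_dec u0 (cu (t0+h))); auto).
      assert (Rmax u0 (cu (t0 + h)) = u0 \/ Rmax u0 (cu (t0 + h)) = cu (t0+h)) by
               (unfold Rmax; destruct (Rle_dec u0 (cu (t0+h))); auto).
      apply B1.
      * apply Hb; apply Rabs_def1; lra.
      * apply Rabs_def1; lra.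
      * apply Rabs_def1; lra.
  - apply dpl_to_lim. exact Du.
  - unfold B. apply (dpl_to_lim (fun t => g u0 (cv t))).
    apply (derivable_pt_lim_comp cv (fun s => g u0 s) t0 dv (gv u0 v0) Dv).
    apply Hv. auto.
Qed.


Lemma dpl_const_near f t t0 d c : Rabs (t - t0) < d ->
  (forall s, Rabs (s - t0) < d -> f s = c) -> derivable_pt_lim f t 0.
Proof.
  intros Ht Hf. apply dpl_local with (fun _ => c) (d - Rabs (t - t0)); [lra| |apply derivable_pt_lim_const].
  intros y Hy. apply Hf.
  replace (y - t0) with ((y - t) + (t - t0)) by ring.
  eapply Rle_lt_trans; [apply Rabs_triang|lra].
Qed.

Lemma core1 (P T N V W : R -> v4) (t0 d : R) :
 (forall t, Rabs (t - t0) < d ->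
   vd P t (T t) /\ (exists Qt, vd T t Qt) /\ vd N t vzero /\
   (exists al be, vd V t (vscal al (V t)) /\ vd W t (vlin be (V t) (2 * al) (W t))) /\
   mdot (P t) (P t) = -1 /\ mdot (P t) (T t) = 0 /\ mdot (T t) (T t) = 1 /\
   mdot (P t) (N t) = 0 /\ mdot (T t) (N t) = 0 /\ mdot (N t) (N t) = 1 /\
   mdot (P t) (V t) = 0 /\ mdot (T t) (V t) = 0 /\ mdot (N t) (V t) = 0 /\
   0 < mdot (V t) (V t)) ->
 forall t, Rabs (t - t0) < d ->
   derivable_pt_lim (fun s => mdot (P s) (W s) / mdot (V s) (V s)) t
      (mdot (T t) (W t) / mdot (V t) (V t)) /\
   derivable_pt_lim (fun s => mdot (T s) (W s) / mdot (V s) (V s)) t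
      (mdot (P t) (W t) / mdot (V t) (V t)).
Proof.
  intros Hall t Ht.
  destruct (Hall t Ht) as (dP & [Qt dT] & dN & (alt & bet & dV & dW) & PP & PT & TT & PN & TN & NN & PV & TV & NV & VV).
  set (Q := fun _ : R => Qt). set (al := fun _ : R => alt). set (be := fun _ : R => bet).
  change Qt with (Q t) in dT. change alt with (al t) in dV, dW. change bet with (be t) in dW.
  clearbody Q al be.
  assert (E1 : mdot (T t) (T t) + mdot (P t) (Q t) = 0).
  { eapply uniqueness_limite; [apply vd_mdot; eauto|].
    apply (dpl_const_near _ t t0 d 0 Ht). intros s Hs. apply (Hall s Hs). }
  assert (E2 : mdot (Q t) (T t) + mdot (T t) (Q t) = 0).
  { eapply uniqueness_limite; [apply vd_mdot; eauto|].
    apply (dpl_const_near _ t t0 d 1 Ht). intros s Hs. apply (Hall s Hs). }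
  assert (E3 : mdot (Q t) (N t) + mdot (T t) vzero = 0).
  { eapply uniqueness_limite; [apply vd_mdot; eauto|].
    apply (dpl_const_near _ t t0 d 0 Ht). intros s Hs. apply (Hall s Hs). }
  assert (E4 : mdot (Q t) (V t) + mdot (T t) (vscal (al t) (V t)) = 0).
  { eapply uniqueness_limite; [apply vd_mdot; eauto|].
    apply (dpl_const_near _ t t0 d 0 Ht). intros s Hs. apply (Hall s Hs). }
  assert (Z : vlin 1 (Q t) (-1) (P t) = vzero).
  { apply (orth_zero (P t) (T t) (N t) (V t)).
    - rewrite gram4_block by auto. rewrite PP, TT, NN, NV. nra.
    - rewrite mdot_vlin_r. rewrite (mdot_sym (P t) (Q t)) in *. lra.
    - rewrite mdot_vlin_r, (mdot_sym (T t) (P t)), PT. rewrite (mdot_sym (T t) (Q t)) in *. lra.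
    - rewrite mdot_vlin_r, (mdot_sym (N t) (P t)), PN, (mdot_sym (N t) (Q t)).
      replace (mdot (T t) vzero) with 0 in E3 by (unfold mdot, vzero; simpl; ring). lra.
    - rewrite mdot_vlin_r, (mdot_sym (V t) (P t)), PV, (mdot_sym (V t) (Q t)).
      replace (mdot (T t) (vscal (al t) (V t))) with (al t * mdot (T t) (V t)) in E4
        by (unfold mdot, vscal; simpl; ring). rewrite TV in E4. lra. }
  assert (QW : mdot (Q t) (W t) = mdot (P t) (W t)).
  { assert (mdot (vlin 1 (Q t) (-1) (P t)) (W t) = 0) by (rewrite Z; unfold mdot, vzero; simpl; ring).
    rewrite mdot_vlin_l in H. lra. }
  assert (VVd := vd_mdot V V t _ _ dV dV).
  assert (Vne : mdot (V t) (V t) <> 0) by lra.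
  split.
  - eapply dpl_val; [|apply (derivable_pt_lim_div (fun s => mdot (P s) (W s)) (fun s => mdot (V s) (V s)));
      [apply vd_mdot; eauto|exact VVd|auto]].
    unfold Rsqr. rewrite mdot_vlin_r.
    replace (mdot (vscal (al t) (V t)) (V t)) with (al t * mdot (V t) (V t)) by (unfold mdot, vscal; simpl; ring).
    replace (mdot (V t) (vscal (al t) (V t))) with (al t * mdot (V t) (V t)) by (unfold mdot, vscal; simpl; ring).
    rewrite PV. field. auto.
  - eapply dpl_val; [|apply (derivable_pt_lim_div (fun s => mdot (T s) (W s)) (fun s => mdot (V s) (V s)));
      [apply vd_mdot; eauto|exact VVd|auto]].
    unfold Rsqr. rewrite mdot_vlin_r, QW.
    replace (mdot (vscal (al t) (V t)) (V t)) with (al t * mdot (V t) (V t)) by (unfold mdot, vscal; simpl; ring).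
    replace (mdot (V t) (vscal (al t) (V t))) with (al t * mdot (V t) (V t)) by (unfold mdot, vscal; simpl; ring).
    rewrite TV. field. auto.
Qed.


Definition wexp (x y a b : v4) := mdot x a * mdot y b - mdot x b * mdot y a.

Lemma vec_eq_mdot x y : (forall a, mdot x a = mdot y a) -> x = y.
Proof.
  intros H. destruct x as [a0 a1 a2 a3], y as [b0 b1 b2 b3].
  pose proof (H (mk4 1 0 0 0)); pose proof (H (mk4 0 1 0 0));
  pose proof (H (mk4 0 0 1 0)); pose proof (H (mk4 0 0 0 1)).
  unfold mdot in *; simpl in *. apply v4_ext; simpl; lra.
Qed.

Lemma wedge_par x y : wedge0 x y -> 0 < mdot x x -> y = vscal (mdot y x / mdot x x) x.
Proof.
  intros W Hx. apply vec_eq_mdot. intros a. specialize (W x a).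
  replace (mdot (vscal (mdot y x / mdot x x) x) a)
    with (mdot y x / mdot x x * mdot x a) by (unfold mdot, vscal; simpl; ring).
  apply Rmult_eq_reg_l with (mdot x x); [|lra].
  replace (mdot x x * (mdot y x / mdot x x * mdot x a)) with (mdot y x * mdot x a) by (field; lra).
  lra.
Qed.

Lemma par_step1 x y xu yu : wedge0 x y -> 0 < mdot x x ->
  (forall a b, wexp xu y a b + wexp x yu a b = 0) ->
  exists lam, yu = vlin (mdot y x / mdot x x) xu lam x.
Proof.
  intros W Hx W1. set (mu := mdot y x / mdot x x).
  assert (Hy : y = vscal mu x) by (apply wedge_par; auto).
  set (z := vlin 1 yu (- mu) xu).
  assert (Wz : wedge0 x z).
  { intros a b. rewrite <- (W1 a b). rewrite Hy. unfold z, wexp.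
    rewrite !mdot_vlin_l. unfold mdot, vscal; simpl; ring. }
  exists (mdot z x / mdot x x).
  pose proof (wedge_par x z Wz Hx) as Hz.
  apply vec_eq_mdot. intros a.
  assert (E : mdot z a = mdot (vscal (mdot z x / mdot x x) x) a) by (rewrite <- Hz; auto).
  revert E. set (k := mdot z x / mdot x x). clearbody k. unfold z.
  unfold mdot, vscal, vlin, vadd; simpl. intro E. unfold mu in *. lra.
Qed.

Lemma par_step2 x y xu yu xuu yuu lam : wedge0 x y -> 0 < mdot x x ->
  yu = vlin (mdot y x / mdot x x) xu lam x ->
  (forall a b, wexp xuu y a b + 2 * wexp xu yu a b + wexp x yuu a b = 0) ->
  exists kap, yuu = vadd (vlin (mdot y x / mdot x x) xuu (2 * lam) xu) (vscal kap x).
Proof.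
  intros W Hx Hyu W2. set (mu := mdot y x / mdot x x) in *.
  assert (Hy : y = vscal mu x) by (apply wedge_par; auto).
  set (z := vadd (vlin 1 yuu (- mu) xuu) (vscal (- 2 * lam) xu)).
  assert (Wz : wedge0 x z).
  { intros a b. rewrite <- (W2 a b). rewrite Hyu. rewrite Hy at 1. unfold z, wexp.
    unfold mdot, vscal, vlin, vadd; simpl; ring. }
  exists (mdot z x / mdot x x).
  pose proof (wedge_par x z Wz Hx) as Hz.
  apply vec_eq_mdot. intros a.
  assert (E : mdot z a = mdot (vscal (mdot z x / mdot x x) x) a) by (rewrite <- Hz; auto).
  revert E. unfold z. set (k := mdot z x / mdot x x). clearbody k.
  unfold mdot, vscal, vlin, vadd; simpl. intro E. lra.
Qed.

Definition vcont U (x : R -> R -> v4) := continuous2 U (fun u v => x0 (x u v)) /\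
  continuous2 U (fun u v => x1 (x u v)) /\ continuous2 U (fun u v => x2 (x u v)) /\
  continuous2 U (fun u v => x3 (x u v)).

Lemma vsmooth_cont U x : vsmooth U x -> vcont U x.
Proof. intros (A0&A1&A2&A3). repeat split; apply smooth_cont; auto. Qed.

Lemma vsmooth_pu U x xu : open2 U -> vsmooth U x -> vpartial_u U x xu -> vsmooth U xu.
Proof. intros HU (A0&A1&A2&A3) (B0&B1&B2&B3).
  exact (conj (smooth_pu _ _ _ HU A0 B0) (conj (smooth_pu _ _ _ HU A1 B1)
    (conj (smooth_pu _ _ _ HU A2 B2) (smooth_pu _ _ _ HU A3 B3)))). Qed.
Lemma vsmooth_pv U x xv : open2 U -> vsmooth U x -> vpartial_v U x xv -> vsmooth U xv.
Proof. intros HU (A0&A1&A2&A3) (B0&B1&B2&B3).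
  exact (conj (smooth_pv _ _ _ HU A0 B0) (conj (smooth_pv _ _ _ HU A1 B1)
    (conj (smooth_pv _ _ _ HU A2 B2) (smooth_pv _ _ _ HU A3 B3)))). Qed.

Lemma vsmooth_ex_pu U x : open2 U -> vsmooth U x -> exists xu, vpartial_u U x xu /\ vsmooth U xu.
Proof.
  intros HU Hs. pose proof Hs as (A0&A1&A2&A3).
  destruct (smooth_ex_pu _ _ A0) as [g0 G0]. destruct (smooth_ex_pu _ _ A1) as [g1 G1].
  destruct (smooth_ex_pu _ _ A2) as [g2 G2]. destruct (smooth_ex_pu _ _ A3) as [g3 G3].
  exists (fun u v => mk4 (g0 u v) (g1 u v) (g2 u v) (g3 u v)).
  assert (P : vpartial_u U x (fun u v => mk4 (g0 u v) (g1 u v) (g2 u v) (g3 u v))) by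
    (repeat split; simpl; auto).
  split; auto. eapply vsmooth_pu; eauto.
Qed.
Lemma vsmooth_ex_pv U x : open2 U -> vsmooth U x -> exists xv, vpartial_v U x xv /\ vsmooth U xv.
Proof.
  intros HU Hs. pose proof Hs as (A0&A1&A2&A3).
  destruct (smooth_ex_pv _ _ A0) as [g0 G0]. destruct (smooth_ex_pv _ _ A1) as [g1 G1].
  destruct (smooth_ex_pv _ _ A2) as [g2 G2]. destruct (smooth_ex_pv _ _ A3) as [g3 G3].
  exists (fun u v => mk4 (g0 u v) (g1 u v) (g2 u v) (g3 u v)).
  assert (P : vpartial_v U x (fun u v => mk4 (g0 u v) (g1 u v) (g2 u v) (g3 u v))) by
    (repeat split; simpl; auto).
  split; auto. eapply vsmooth_pv; eauto.
Qed.

Lemma vchain U x xu xv cu cv t du dv : open2 U -> vpartial_u U x xu -> vpartial_v U x xv ->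
  vcont U xu -> U (cu t) (cv t) -> derivable_pt_lim cu t du -> derivable_pt_lim cv t dv ->
  vd (fun s => x (cu s) (cv s)) t (vlin du (xu (cu t) (cv t)) dv (xv (cu t) (cv t))).
Proof.
  intros HU (A0&A1&A2&A3) (B0&B1&B2&B3) (C0&C1&C2&C3) H Du Dv.
  split; [|split; [|split]].
  - eapply dpl_val; [|apply (chain U (fun u v => x0 (x u v)) (fun u v => x0 (xu u v)) (fun u v => x0 (xv u v))); eauto].
    unfold vlin, vadd, vscal; simpl; ring.
  - eapply dpl_val; [|apply (chain U (fun u v => x1 (x u v)) (fun u v => x1 (xu u v)) (fun u v => x1 (xv u v))); eauto].
    unfold vlin, vadd, vscal; simpl; ring.
  - eapply dpl_val; [|apply (chain U (fun u v => x2 (x u v)) (fun u v => x2 (xu u v)) (fun u v => x2 (xv u v))); eauto].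
    unfold vlin, vadd, vscal; simpl; ring.
  - eapply dpl_val; [|apply (chain U (fun u v => x3 (x u v)) (fun u v => x3 (xu u v)) (fun u v => x3 (xv u v))); eauto].
    unfold vlin, vadd, vscal; simpl; ring.
Qed.

Lemma pu_wexp U x y xu yu a b : open2 U -> vpartial_u U x xu -> vpartial_u U y yu ->
  partial_u U (fun u v => wexp (x u v) (y u v) a b)
    (fun u v => wexp (xu u v) (y u v) a b + wexp (x u v) (yu u v) a b).
Proof.
  intros HU Hx Hy.
  pose proof (pu_minus _ _ _ _ _ (pu_mult _ _ _ _ _ (pu_mdotc U x xu a Hx) (pu_mdotc U y yu b Hy))
                                  (pu_mult _ _ _ _ _ (pu_mdotc U x xu b Hx) (pu_mdotc U y yu a Hy))) as P.
  eapply pu_ext; [exact HU| | |exact P]; intros; unfold wexp; simpl; ring.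
Qed.

Lemma vd_eq X t D1 D2 : D1 = D2 -> vd X t D1 -> vd X t D2.
Proof. intros ->; auto. Qed.

Lemma npart U nu nv nuu nuv nvu nuuu nuuv nvuu cu cv du dv t :
 open2 U ->
 vpartial_u U nu nuu -> vpartial_v U nu nuv -> vpartial_u U nv nvu ->
 vpartial_u U nuu nuuu -> vpartial_v U nuu nuuv -> vpartial_u U nvu nvuu ->
 vcont U nuu -> vcont U nuuu ->
 (forall u v, U u v -> nuv u v = nvu u v) -> (forall u v, U u v -> nuuv u v = nvuu u v) ->
 (forall u v, U u v -> wedge0 (nu u v) (nv u v)) ->
 U (cu t) (cv t) -> derivable_pt_lim cu t du -> derivable_pt_lim cv t dv ->
 vlin du (nu (cu t) (cv t)) dv (nv (cu t) (cv t)) = vzero ->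
 0 < mdot (nu (cu t) (cv t)) (nu (cu t) (cv t)) ->
 exists al be, vd (fun s => nu (cu s) (cv s)) t (vscal al (nu (cu t) (cv t))) /\
   vd (fun s => nuu (cu s) (cv s)) t (vlin be (nu (cu t) (cv t)) (2 * al) (nuu (cu t) (cv t))).
Proof.
  intros HU Pu Pv Pvu Puu Puv Pvuu Cuu Cuuu Sym1 Sym2 Wg Hc Du Dv Ker Pos.
  assert (W1 : forall u v, U u v -> forall a b, wexp (nuu u v) (nv u v) a b + wexp (nu u v) (nvu u v) a b = 0).
  { intros u v H a b.
    exact (pu_zero U (fun u v => wexp (nu u v) (nv u v) a b) _ u v HU
      (fun u v H => Wg u v H a b) (pu_wexp U nu nv nuu nvu a b HU Pu Pvu) H). }
  assert (W2 : forall u v, U u v -> forall a b, wexp (nuuu u v) (nv u v) a b + 2 * wexp (nuu u v) (nvu u v) a b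
       + wexp (nu u v) (nvuu u v) a b = 0).
  { intros u v H a b.
    pose proof (pu_zero U (fun u v => wexp (nuu u v) (nv u v) a b + wexp (nu u v) (nvu u v) a b) _ u v HU
      (fun u v H => W1 u v H a b) (pu_plus _ _ _ _ _ (pu_wexp U nuu nv nuuu nvu a b HU Puu Pvu)
          (pu_wexp U nu nvu nuu nvuu a b HU Pu Pvuu)) H) as Z.
    simpl in Z. lra. }
  set (p1 := cu t) in *. set (p2 := cv t) in *.
  set (x := nu p1 p2) in *. set (y := nv p1 p2) in *.
  destruct (par_step1 x y (nuu p1 p2) (nvu p1 p2) (Wg _ _ Hc) Pos (W1 _ _ Hc)) as [lam Hlam].
  destruct (par_step2 x y (nuu p1 p2) (nvu p1 p2) (nuuu p1 p2) (nvuu p1 p2) lam (Wg _ _ Hc) Pos Hlam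
     (W2 _ _ Hc)) as [kap Hkap].
  set (mu := mdot y x / mdot x x) in *.
  assert (Hy : y = vscal mu x) by (apply wedge_par; auto; apply Wg; auto).
  assert (Hdu : du = - dv * mu).
  { assert (mdot (vlin du x dv y) x = 0) by (rewrite Ker; unfold mdot, vzero; simpl; ring).
    rewrite mdot_vlin_l, Hy in H.
    replace (mdot (vscal mu x) x) with (mu * mdot x x) in H by (unfold mdot, vscal; simpl; ring).
    apply Rmult_eq_reg_r with (mdot x x); lra. }
  exists (dv * lam), (dv * kap). split.
  - eapply vd_eq; [|apply (vchain U nu nuu nuv cu cv t du dv); auto].
    fold p1 p2 x. rewrite Sym1, Hlam by auto. rewrite Hdu.
    apply v4_ext; unfold vlin, vadd, vscal; simpl; ring.
  - eapply vd_eq; [|apply (vchain U nuu nuuu nuuv cu cv t du dv); auto].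
    fold p1 p2 x. rewrite Sym2, Hkap by auto. rewrite Hdu.
    apply v4_ext; unfold vlin, vadd, vscal; simpl; ring.
Qed.

Definition swU (U : R -> R -> Prop) := fun u v => U v u.
Definition sw {A} (x : R -> R -> A) := fun u v => x v u.

Lemma open2_sw U : open2 U -> open2 (swU U).
Proof.
  intros H u v Huv. destruct (H v u Huv) as [e [He Hb]]. exists e; split; auto.
  intros. apply Hb; auto.
Qed.
Lemma vpu_sw U x xv : vpartial_v U x xv -> vpartial_u (swU U) (sw x) (sw xv).
Proof. intros (A0&A1&A2&A3). repeat split; intros u v H; unfold sw, swU in *; auto. Qed.
Lemma vpv_sw U x xu : vpartial_u U x xu -> vpartial_v (swU U) (sw x) (sw xu).
Proof. intros (A0&A1&A2&A3). repeat split; intros u v H; unfold sw, swU in *; auto. Qed.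
Lemma cont_sw U g : continuous2 U g -> continuous2 (swU U) (sw g).
Proof.
  intros H u v Huv eps Heps. destruct (H v u Huv eps Heps) as [d [Hd Hb]].
  exists d; split; auto. intros. unfold sw, swU in *. apply Hb; auto.
Qed.
Lemma vcont_sw U x : vcont U x -> vcont (swU U) (sw x).
Proof. intros (A0&A1&A2&A3). repeat split; apply (cont_sw U); auto. Qed.
Lemma wedge_anti x y : wedge0 x y -> wedge0 y x.
Proof. intros W a b. specialize (W b a). lra. Qed.


Lemma finish (Hs : R -> R) (P T N V W : R -> v4) t0 d0 DV0 :
 0 < d0 -> vd V t0 DV0 -> 0 < mdot (V t0) (V t0) ->
 (forall t, Rabs (t - t0) < d0 ->
   vd P t (T t) /\ (exists Qt, vd T t Qt) /\ vd N t vzero /\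
   mdot (P t) (P t) = -1 /\ mdot (P t) (T t) = 0 /\ mdot (T t) (T t) = 1 /\
   mdot (P t) (N t) = 0 /\ mdot (T t) (N t) = 0 /\ mdot (N t) (N t) = 1 /\
   mdot (P t) (V t) = 0 /\ mdot (T t) (V t) = 0 /\ mdot (N t) (V t) = 0 /\
   (0 < mdot (V t) (V t) ->
     (exists al be, vd V t (vscal al (V t)) /\ vd W t (vlin be (V t) (2 * al) (W t))) /\
     / Hs t = 2 * (mdot (P t) (W t) / mdot (V t) (V t)))) ->
 exists d, 0 < d /\ d <= d0 /\ exists g : R -> R, forall t, Rabs (t - t0) < d ->
   derivable_pt_lim (fun s => / Hs s) t (g t) /\ derivable_pt_lim g t (/ Hs t).
Proof.
  intros Hd0 DV Pos Hall.
  pose proof (vd_mdot V V t0 _ _ DV DV) as DVV.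
  destruct (dpl_cont _ _ _ DVV (mdot (V t0) (V t0) / 2)) as [d1 [Hd1 C1]]; [lra|].
  set (d := Rmin d0 d1).
  assert (Hd : 0 < d) by (apply Rmin_pos; auto).
  assert (Hdd0 : d <= d0) by apply Rmin_l. assert (Hdd1 : d <= d1) by apply Rmin_r.
  assert (PosN : forall t, Rabs (t - t0) < d -> 0 < mdot (V t) (V t)).
  { intros t Ht. specialize (C1 (t - t0)). replace (t0 + (t - t0)) with t in C1 by ring.
    assert (Rabs (mdot (V t) (V t) - mdot (V t0) (V t0)) < mdot (V t0) (V t0) / 2) by (apply C1; lra).
    apply Rabs_def2 in H. lra. }
  assert (Hc : forall t, Rabs (t - t0) < d ->
   vd P t (T t) /\ (exists Qt, vd T t Qt) /\ vd N t vzero /\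
   (exists al be, vd V t (vscal al (V t)) /\ vd W t (vlin be (V t) (2 * al) (W t))) /\
   mdot (P t) (P t) = -1 /\ mdot (P t) (T t) = 0 /\ mdot (T t) (T t) = 1 /\
   mdot (P t) (N t) = 0 /\ mdot (T t) (N t) = 0 /\ mdot (N t) (N t) = 1 /\
   mdot (P t) (V t) = 0 /\ mdot (T t) (V t) = 0 /\ mdot (N t) (V t) = 0 /\
   0 < mdot (V t) (V t)).
  { intros t Ht. assert (Pt := PosN t Ht). assert (Ht0 : Rabs (t - t0) < d0) by lra.
    destruct (Hall t Ht0) as (h1&h2&h3&h4&h5&h6&h7&h8&h9&h10&h11&h12&h13).
    destruct (h13 Pt) as [h14 _]. tauto. }
  pose proof (core1 P T N V W t0 d Hc) as K.
  exists d. split; auto. split; auto.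
  exists (fun t => 2 * (mdot (T t) (W t) / mdot (V t) (V t))).
  intros t Ht. destruct (K t Ht) as [K1 K2].
  split.
  - apply dpl_local with (fun s => 2 * (mdot (P s) (W s) / mdot (V s) (V s))) (d - Rabs (t - t0)); [lra| |].
    + intros y Hy. assert (Hy' : Rabs (y - t0) < d).
      { replace (y - t0) with ((y - t) + (t - t0)) by ring.
        eapply Rle_lt_trans; [apply Rabs_triang|lra]. }
      assert (Hy0 : Rabs (y - t0) < d0) by lra.
      destruct (Hall y Hy0) as (_&_&_&_&_&_&_&_&_&_&_&_&h13).
      apply (h13 (PosN y Hy')).
    + apply derivable_pt_lim_scal. auto.
  - assert (Ht0 : Rabs (t - t0) < d0) by lra. destruct (Hall t Ht0) as (_&_&_&_&_&_&_&_&_&_&_&_&h13).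
    rewrite (proj2 (h13 (PosN t Ht))). apply derivable_pt_lim_scal. auto.
Qed.

Lemma vschwarz U g gu gv guv gvu : open2 U -> vpartial_u U g gu -> vpartial_v U g gv ->
  vpartial_v U gu guv -> vpartial_u U gv gvu -> vcont U guv -> vcont U gvu ->
  forall u v, U u v -> guv u v = gvu u v.
Proof.
  intros HU (A0&A1&A2&A3) (B0&B1&B2&B3) (C0&C1&C2&C3) (D0&D1&D2&D3) (E0&E1&E2&E3) (F0&F1&F2&F3) u v H.
  apply v4_ext.
  - apply (schwarz U (fun u v => x0 (g u v)) (fun u v => x0 (gu u v)) (fun u v => x0 (gv u v))
      (fun u v => x0 (guv u v)) (fun u v => x0 (gvu u v))); auto.
  - apply (schwarz U (fun u v => x1 (g u v)) (fun u v => x1 (gu u v)) (fun u v => x1 (gv u v))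
      (fun u v => x1 (guv u v)) (fun u v => x1 (gvu u v))); auto.
  - apply (schwarz U (fun u v => x2 (g u v)) (fun u v => x2 (gu u v)) (fun u v => x2 (gv u v))
      (fun u v => x2 (guv u v)) (fun u v => x2 (gvu u v))); auto.
  - apply (schwarz U (fun u v => x3 (g u v)) (fun u v => x3 (gu u v)) (fun u v => x3 (gv u v))
      (fun u v => x3 (guv u v)) (fun u v => x3 (gvu u v))); auto.
Qed.

Lemma vpu_uniq_ext U g g' gu gu' : open2 U -> (forall u v, U u v -> g u v = g' u v) ->
  vpartial_u U g gu -> vpartial_u U g' gu' -> forall u v, U u v -> gu u v = gu' u v.
Proof.
  intros HU Hg (A0&A1&A2&A3) (B0&B1&B2&B3) u v H.
  apply v4_ext.
  - apply (pu_uniq_ext U (fun u v => x0 (g u v)) (fun u v => x0 (g' u v)) (fun u v => x0 (gu u v))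
      (fun u v => x0 (gu' u v))); auto. intros; rewrite Hg; auto.
  - apply (pu_uniq_ext U (fun u v => x1 (g u v)) (fun u v => x1 (g' u v)) (fun u v => x1 (gu u v))
      (fun u v => x1 (gu' u v))); auto. intros; rewrite Hg; auto.
  - apply (pu_uniq_ext U (fun u v => x2 (g u v)) (fun u v => x2 (g' u v)) (fun u v => x2 (gu u v))
      (fun u v => x2 (gu' u v))); auto. intros; rewrite Hg; auto.
  - apply (pu_uniq_ext U (fun u v => x3 (g u v)) (fun u v => x3 (g' u v)) (fun u v => x3 (gu u v))
      (fun u v => x3 (gu' u v))); auto. intros; rewrite Hg; auto.
Qed.
Lemma vpv_uniq_ext U g g' gv gv' : open2 U -> (forall u v, U u v -> g u v = g' u v) ->
  vpartial_v U g gv -> vpartial_v U g' gv' -> forall u v, U u v -> gv u v = gv' u v.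
Proof.
  intros HU Hg (A0&A1&A2&A3) (B0&B1&B2&B3) u v H.
  apply v4_ext.
  - apply (pv_uniq_ext U (fun u v => x0 (g u v)) (fun u v => x0 (g' u v)) (fun u v => x0 (gv u v))
      (fun u v => x0 (gv' u v))); auto. intros; rewrite Hg; auto.
  - apply (pv_uniq_ext U (fun u v => x1 (g u v)) (fun u v => x1 (g' u v)) (fun u v => x1 (gv u v))
      (fun u v => x1 (gv' u v))); auto. intros; rewrite Hg; auto.
  - apply (pv_uniq_ext U (fun u v => x2 (g u v)) (fun u v => x2 (g' u v)) (fun u v => x2 (gv u v))
      (fun u v => x2 (gv' u v))); auto. intros; rewrite Hg; auto.
  - apply (pv_uniq_ext U (fun u v => x3 (g u v)) (fun u v => x3 (g' u v)) (fun u v => x3 (gv u v))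
      (fun u v => x3 (gv' u v))); auto. intros; rewrite Hg; auto.
Qed.

Lemma pu_const U g gu c u v : open2 U -> (forall u v, U u v -> g u v = c) ->
  partial_u U g gu -> U u v -> gu u v = 0.
Proof.
  intros HU Hg H Huv. apply (pu_uniq_ext U g (fun _ _ => c) gu (fun _ _ => 0)); auto.
  intros a b _. apply derivable_pt_lim_const.
Qed.
Lemma pv_const U g gv c u v : open2 U -> (forall u v, U u v -> g u v = c) ->
  partial_v U g gv -> U u v -> gv u v = 0.
Proof.
  intros HU Hg H Huv. apply (pv_uniq_ext U g (fun _ _ => c) gv (fun _ _ => 0)); auto.
  intros a b _. apply derivable_pt_lim_const.
Qed.

Lemma smooth1_d2 a b c c' : smooth1 a b c ->
  (forall t, a < t < b -> derivable_pt_lim c t (c' t)) ->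
  forall t, a < t < b -> exists l, derivable_pt_lim c' t l.
Proof.
  intros Hs Hd t Ht. destruct (Hs 2%nat) as [_ [g' [Hg' [_ [g'' [Hg'' _]]]]]].
  exists (g'' t). apply dpl_local with g' (Rmin (t - a) (b - t)).
  - apply Rmin_pos; lra.
  - intros y Hy. assert (a < y < b).
    { pose proof (Rmin_l (t - a) (b - t)); pose proof (Rmin_r (t - a) (b - t)).
      apply Rabs_def2 in Hy. lra. }
    eapply uniqueness_limite; eauto.
  - apply Hg''; auto.
Qed.

Lemma vd_vlin a b X Y t da db DX DY : derivable_pt_lim a t da -> derivable_pt_lim b t db ->
  vd X t DX -> vd Y t DY ->
  vd (fun s => vlin (a s) (X s) (b s) (Y s)) t
     (mk4 (da * x0 (X t) + a t * x0 DX + (db * x0 (Y t) + b t * x0 DY))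
          (da * x1 (X t) + a t * x1 DX + (db * x1 (Y t) + b t * x1 DY))
          (da * x2 (X t) + a t * x2 DX + (db * x2 (Y t) + b t * x2 DY))
          (da * x3 (X t) + a t * x3 DX + (db * x3 (Y t) + b t * x3 DY))).
Proof.
  intros Ha Hb (A0&A1&A2&A3) (B0&B1&B2&B3). unfold vlin, vadd, vscal; simpl.
  repeat split; simpl; apply derivable_pt_lim_plus; apply derivable_pt_lim_mult; auto.
Qed.

Lemma pt_pos_L f fu fv n nu nv L M N : base_ok f fu fv n -> dn_ok f fu fv n nu nv L M N ->
  L * N = M ^ 2 -> (L <> 0 <-> 0 < mdot nu nu).
Proof.
  intros Hb Hd Hfl. pose proof Hb as (Hf&Hp&_). pose proof Hd as (Hnf&_&Hnu&_).
  destruct (spacelike f nu Hf Hp Hnf) as [S1 S2].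
  split.
  - intro HL. destruct (Rle_lt_or_eq_dec _ _ S1) as [h|h]; auto.
    exfalso. specialize (S2 (eq_sym h)). rewrite S2 in Hnu.
    unfold mdot, vzero in Hnu; simpl in Hnu. lra.
  - intros Hpos HL. assert (HM : M = 0) by (rewrite HL in Hfl; nra).
    pose proof (pt_nu f fu fv n nu nv L M N Hb Hd) as E.
    rewrite HL, HM in E.
    assert (nu = vzero) by (rewrite E; apply v4_ext; unfold vlin, vadd, vscal; simpl; field;
      pose proof (pt_D f fu fv n Hb); lra).
    rewrite H in Hpos. unfold mdot, vzero in Hpos; simpl in Hpos. lra.
Qed.

Lemma pt_pos_N f fu fv n nu nv L M N : base_ok f fu fv n -> dn_ok f fu fv n nu nv L M N ->
  L * N = M ^ 2 -> (N <> 0 <-> 0 < mdot nv nv).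
Proof.
  intros Hb Hd Hfl. pose proof Hb as (Hf&Hp&_). pose proof Hd as (_&_&_&_&Hnf&_&_&Hnv).
  destruct (spacelike f nv Hf Hp Hnf) as [S1 S2].
  split.
  - intro HN. destruct (Rle_lt_or_eq_dec _ _ S1) as [h|h]; auto.
    exfalso. specialize (S2 (eq_sym h)). rewrite S2 in Hnv.
    unfold mdot, vzero in Hnv; simpl in Hnv. lra.
  - intros Hpos HN. assert (HM : M = 0) by (rewrite HN in Hfl; nra).
    pose proof (pt_nv f fu fv n nu nv L M N Hb Hd) as E.
    rewrite HN, HM in E.
    assert (nv = vzero) by (rewrite E; apply v4_ext; unfold vlin, vadd, vscal; simpl; field;
      pose proof (pt_D f fu fv n Hb); lra).
    rewrite H in Hpos. unfold mdot, vzero in Hpos; simpl in Hpos. lra.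
Qed.


Theorem lemma3p2
  (U : R -> R -> Prop) (f n fu fv fuu fuv fvv : R -> R -> v4)
  (a b : R) (cu cv cu' cv' : R -> R) :
  (* f : U -> H^3 is a smooth immersion (local chart of the surface) *)
  open2 U ->
  (forall u v, U u v -> in_H3 (f u v)) ->
  vsmooth U f ->
  vpartial_u U f fu -> vpartial_v U f fv ->
  vpartial_u U fu fuu -> vpartial_v U fu fuv -> vpartial_v U fv fvv ->
  (forall u v, U u v -> lin_indep (fu u v) (fv u v)) ->
  (* a smooth unit normal field *)
  vsmooth U n ->
  (forall u v, U u v -> unit_normal (f u v) (fu u v) (fv u v) (n u v)) ->
  (* extrinsically flat *)
  (forall u v, U u v ->
     Kext (fu u v) (fv u v) (fuu u v) (fuv u v) (fvv u v) (n u v) = 0) ->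
  (* gamma(t) = f(cu t, cv t), t in (a,b), a smooth curve in U *)
  a < b ->
  smooth1 a b cu -> smooth1 a b cv ->
  (forall t, a < t < b -> derivable_pt_lim cu t (cu' t)) ->
  (forall t, a < t < b -> derivable_pt_lim cv t (cv' t)) ->
  (forall t, a < t < b -> U (cu t) (cv t)) ->
  (* gamma avoids the umbilic points *)
  (forall t, a < t < b ->
     ~ umbilic (fu (cu t) (cv t)) (fv (cu t) (cv t)) (fuu (cu t) (cv t))
               (fuv (cu t) (cv t)) (fvv (cu t) (cv t)) (n (cu t) (cv t))) ->
  (* gamma is asymptotic *)
  (forall t, a < t < b ->
     IIq (fuu (cu t) (cv t)) (fuv (cu t) (cv t)) (fvv (cu t) (cv t))
         (n (cu t) (cv t)) (cu' t) (cv' t) = 0) ->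
  (* parametrized by arc length *)
  (forall t, a < t < b ->
     Iq (fu (cu t) (cv t)) (fv (cu t) (cv t)) (cu' t) (cv' t) = 1) ->
  let H := fun t => Hmean (fu (cu t) (cv t)) (fv (cu t) (cv t))
                     (fuu (cu t) (cv t)) (fuv (cu t) (cv t))
                     (fvv (cu t) (cv t)) (n (cu t) (cv t)) in
  (forall t, a < t < b -> H t <> 0) /\
  exists h' : R -> R,
    forall t, a < t < b ->
      derivable_pt_lim (fun s => / H s) t (h' t) /\
      derivable_pt_lim h' t (/ H t).
Proof.
  intros HU Hf Hsf Pfu Pfv Pfuu Pfuv Pfvv Hli Hsn Hun Hfl Hab Scu Scv Dcu Dcv Hc Hnu Hasy Harc H.
  pose proof (vsmooth_pu U f fu HU Hsf Pfu) as Sfu.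
  pose proof (vsmooth_pv U f fv HU Hsf Pfv) as Sfv.
  pose proof (vsmooth_pu U fu fuu HU Sfu Pfuu) as Sfuu.
  pose proof (vsmooth_pv U fu fuv HU Sfu Pfuv) as Sfuv.
  pose proof (vsmooth_pv U fv fvv HU Sfv Pfvv) as Sfvv.
  destruct (vsmooth_ex_pu U fv HU Sfv) as [fvu [Pfvu Sfvu]].
  destruct (vsmooth_ex_pu U n HU Hsn) as [nu [Pnu Snu]].
  destruct (vsmooth_ex_pv U n HU Hsn) as [nv [Pnv Snv]].
  destruct (vsmooth_ex_pu U nu HU Snu) as [nuu [Pnuu Snuu]].
  destruct (vsmooth_ex_pv U nu HU Snu) as [nuv [Pnuv Snuv]].
  destruct (vsmooth_ex_pu U nv HU Snv) as [nvu [Pnvu Snvu]].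
  destruct (vsmooth_ex_pv U nv HU Snv) as [nvv [Pnvv Snvv]].
  destruct (vsmooth_ex_pu U nuu HU Snuu) as [nuuu [Pnuuu Snuuu]].
  destruct (vsmooth_ex_pv U nuu HU Snuu) as [nuuv [Pnuuv Snuuv]].
  destruct (vsmooth_ex_pu U nuv HU Snuv) as [nuvu [Pnuvu Snuvu]].
  destruct (vsmooth_ex_pv U nuv HU Snuv) as [nuvv [Pnuvv Snuvv]].
  destruct (vsmooth_ex_pu U nvu HU Snvu) as [nvuu [Pnvuu Snvuu]].
  destruct (vsmooth_ex_pv U nvu HU Snvu) as [nvuv [Pnvuv Snvuv]].
  destruct (vsmooth_ex_pu U nvv HU Snvv) as [nvvu [Pnvvu Snvvu]].
  destruct (vsmooth_ex_pv U nvv HU Snvv) as [nvvv [Pnvvv Snvvv]].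
  assert (S1 : forall u v, U u v -> nuv u v = nvu u v)
    by (apply (vschwarz U n nu nv); auto; apply vsmooth_cont; auto).
  assert (S2u : forall u v, U u v -> nuuv u v = nvuu u v).
  { intros u v Huv. rewrite (vschwarz U nu nuu nuv nuuv nuvu) by (auto; apply vsmooth_cont; auto).
    apply (vpu_uniq_ext U nuv nvu); auto. }
  assert (S2v : forall u v, U u v -> nvvu u v = nuvv u v).
  { intros u v Huv. rewrite <- (vschwarz U nv nvu nvv nvuv nvvu) by (auto; apply vsmooth_cont; auto).
    apply (vpv_uniq_ext U nvu nuv); auto. intros; symmetry; auto. }
  assert (F1 : forall u v, U u v -> mdot (fu u v) (f u v) = 0).
  { intros u v Huv. pose proof (pu_const U _ _ (-1) u v HU (fun u v H => proj1 (Hf u v H))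
       (pu_mdot U f f fu fu Pfu Pfu) Huv). simpl in H0. rewrite (mdot_sym (f u v)) in H0. lra. }
  assert (F2 : forall u v, U u v -> mdot (fv u v) (f u v) = 0).
  { intros u v Huv. pose proof (pv_const U _ _ (-1) u v HU (fun u v H => proj1 (Hf u v H))
       (pv_mdot U f f fv fv Pfv Pfv) Huv). simpl in H0. rewrite (mdot_sym (f u v)) in H0. lra. }
  assert (F3u : forall u v, U u v -> mdot (nu u v) (n u v) = 0).
  { intros u v Huv. pose proof (pu_const U _ _ 1 u v HU (fun u v H => proj1 (Hun u v H))
       (pu_mdot U n n nu nu Pnu Pnu) Huv). simpl in H0. rewrite (mdot_sym (n u v)) in H0. lra. }
  assert (F3v : forall u v, U u v -> mdot (nv u v) (n u v) = 0).
  { intros u v Huv. pose proof (pv_const U _ _ 1 u v HU (fun u v H => proj1 (Hun u v H))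
       (pv_mdot U n n nv nv Pnv Pnv) Huv). simpl in H0. rewrite (mdot_sym (n u v)) in H0. lra. }
  assert (F4u : forall u v, U u v -> mdot (nu u v) (f u v) = 0).
  { intros u v Huv. pose proof (pu_const U _ _ 0 u v HU (fun u v H => proj1 (proj2 (Hun u v H)))
       (pu_mdot U n f nu fu Pnu Pfu) Huv). simpl in H0.
    destruct (Hun u v Huv) as (_&_&h&_). rewrite h in H0. lra. }
  assert (F4v : forall u v, U u v -> mdot (nv u v) (f u v) = 0).
  { intros u v Huv. pose proof (pv_const U _ _ 0 u v HU (fun u v H => proj1 (proj2 (Hun u v H)))
       (pv_mdot U n f nv fv Pnv Pfv) Huv). simpl in H0.
    destruct (Hun u v Huv) as (_&_&_&h). rewrite h in H0. lra. }
  assert (F5 : forall u v, U u v -> mdot (nu u v) (fu u v) = - mdot (fuu u v) (n u v)).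
  { intros u v Huv. pose proof (pu_const U _ _ 0 u v HU (fun u v H => proj1 (proj2 (proj2 (Hun u v H))))
       (pu_mdot U n fu nu fuu Pnu Pfuu) Huv). simpl in H0. rewrite (mdot_sym (n u v)) in H0. lra. }
  assert (F6 : forall u v, U u v -> mdot (nv u v) (fu u v) = - mdot (fuv u v) (n u v)).
  { intros u v Huv. pose proof (pv_const U _ _ 0 u v HU (fun u v H => proj1 (proj2 (proj2 (Hun u v H))))
       (pv_mdot U n fu nv fuv Pnv Pfuv) Huv). simpl in H0. rewrite (mdot_sym (n u v)) in H0. lra. }
  assert (F7 : forall u v, U u v -> mdot (nv u v) (fv u v) = - mdot (fvv u v) (n u v)).
  { intros u v Huv. pose proof (pv_const U _ _ 0 u v HU (fun u v H => proj2 (proj2 (proj2 (Hun u v H))))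
       (pv_mdot U n fv nv fvv Pnv Pfvv) Huv). simpl in H0. rewrite (mdot_sym (n u v)) in H0. lra. }
  assert (F8 : forall u v, U u v -> mdot (nu u v) (fv u v) = - mdot (fuv u v) (n u v)).
  { intros u v Huv. pose proof (pv_const U _ _ 0 u v HU F4u (pv_mdot U nu f nuv fv Pnuv Pfv) Huv) as A1.
    pose proof (pu_const U _ _ 0 u v HU F4v (pu_mdot U nv f nvu fu Pnvu Pfu) Huv) as A2.
    simpl in A1, A2. rewrite S1 in A1 by auto. rewrite <- F6 by auto.
    lra. }
  assert (F11 : forall u v, U u v -> mdot (f u v) (nuu u v) = mdot (fuu u v) (n u v)).
  { intros u v Huv. pose proof (pu_const U _ _ 0 u v HU
       (fun u v H => eq_trans (mdot_sym _ _) (F4u u v H)) (pu_mdot U f nu fu nuu Pfu Pnuu) Huv) as A1.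
    simpl in A1. rewrite (mdot_sym (fu u v)), F5 in A1 by auto. lra. }
  assert (F12 : forall u v, U u v -> mdot (f u v) (nvv u v) = mdot (fvv u v) (n u v)).
  { intros u v Huv. pose proof (pv_const U _ _ 0 u v HU
       (fun u v H => eq_trans (mdot_sym _ _) (F4v u v H)) (pv_mdot U f nv fv nvv Pfv Pnvv) Huv) as A1.
    simpl in A1. rewrite (mdot_sym (fv u v)), F7 in A1 by auto. lra. }
  assert (PT : forall u v, U u v -> base_ok (f u v) (fu u v) (fv u v) (n u v) /\
     dn_ok (f u v) (fu u v) (fv u v) (n u v) (nu u v) (nv u v)
       (LL (fuu u v) (n u v)) (MM (fuv u v) (n u v)) (NN (fvv u v) (n u v)) /\
     LL (fuu u v) (n u v) * NN (fvv u v) (n u v) = MM (fuv u v) (n u v) ^ 2).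
  { intros u v Huv.
    assert (Hb : base_ok (f u v) (fu u v) (fv u v) (n u v)).
    { destruct (Hf u v Huv) as [h1 h2]. destruct (Hun u v Huv) as (h3&h4&h5&h6).
      exact (conj h1 (conj h2 (conj (F1 u v Huv) (conj (F2 u v Huv) (conj (Hli u v Huv) (conj h3 (conj h4 (conj h5 h6)))))))). }
    split; [auto|split].
    - unfold LL, MM, NN. repeat split; auto.
    - pose proof (pt_D _ _ _ _ Hb) as HD. specialize (Hfl u v Huv). unfold Kext in Hfl.
      unfold Rdiv in Hfl. apply Rmult_integral in Hfl. destruct Hfl as [h|h].
      + lra.
      + exfalso. revert h. apply Rinv_neq_0_compat. lra. }
  assert (Wg : forall u v, U u v -> wedge0 (nu u v) (nv u v)).
  { intros u v Huv. destruct (PT u v Huv) as (h1&h2&h3). eapply pt_wedge; eauto. }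
  assert (CUR : forall t, a < t < b ->
     vlin (cu' t) (nu (cu t) (cv t)) (cv' t) (nv (cu t) (cv t)) = vzero /\
     mdot (vlin (cu' t) (fu (cu t) (cv t)) (cv' t) (fv (cu t) (cv t))) (nu (cu t) (cv t)) = 0 /\
     mdot (vlin (cu' t) (fu (cu t) (cv t)) (cv' t) (fv (cu t) (cv t))) (nv (cu t) (cv t)) = 0).
  { intros t Ht. destruct (PT _ _ (Hc t Ht)) as (h1&h2&h3). specialize (Hasy t Ht). unfold IIq in Hasy.
    split; [eapply pt_dnX; eauto|].
    destruct (pt_ker _ _ _ _ _ _ _ _ _ h2 h3 _ _ Hasy) as [K1 K2].
    pose proof h2 as (_&_&e1&e2&_&_&e3&e4).
    split; eapply pt_Tn; eauto. }
  set (P := fun s => f (cu s) (cv s)).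
  set (T := fun s => vlin (cu' s) (fu (cu s) (cv s)) (cv' s) (fv (cu s) (cv s))).
  set (Nc := fun s => n (cu s) (cv s)).
  assert (COM : forall t, a < t < b -> vd P t (T t) /\ (exists Qt, vd T t Qt) /\ vd Nc t vzero /\
   mdot (P t) (P t) = -1 /\ mdot (P t) (T t) = 0 /\ mdot (T t) (T t) = 1 /\
   mdot (P t) (Nc t) = 0 /\ mdot (T t) (Nc t) = 0 /\ mdot (Nc t) (Nc t) = 1).
  { intros t Ht. pose proof (Hc t Ht) as Hct.
    destruct (PT _ _ Hct) as ((b1&b2&b3&b4&b5&b6&b7&b8&b9)&_&_).
    split; [|split; [|split]].
    - apply (vchain U f fu fv cu cv t); auto. apply vsmooth_cont; auto.
    - destruct (smooth1_d2 a b cu cu' Scu Dcu t Ht) as [l1 L1].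
      destruct (smooth1_d2 a b cv cv' Scv Dcv t Ht) as [l2 L2].
      eexists. apply (vd_vlin cu' cv' (fun s => fu (cu s) (cv s)) (fun s => fv (cu s) (cv s)) t l1 l2); auto.
      + apply (vchain U fu fuu fuv cu cv t); auto. apply vsmooth_cont; auto.
      + apply (vchain U fv fvu fvv cu cv t); auto. apply vsmooth_cont; auto.
    - eapply vd_eq; [|apply (vchain U n nu nv cu cv t); auto; apply vsmooth_cont; auto].
      apply (CUR t Ht).
    - unfold P, T, Nc. cbv beta.
      split; [exact b1|]. split.
      { rewrite mdot_vlin_r, (mdot_sym (f _ _) (fu _ _)), (mdot_sym (f _ _) (fv _ _)), b3, b4. ring. }
      split; [rewrite pt_TT; apply Harc; auto|]. split; [rewrite mdot_sym; exact b7|].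
      split; [|exact b6].
      rewrite mdot_vlin_l, (mdot_sym (fu _ _) (n _ _)), (mdot_sym (fv _ _) (n _ _)), b8, b9. ring. }
  assert (LOC : forall t0, a < t0 < b -> exists d, 0 < d /\ exists g : R -> R, forall t,
     Rabs (t - t0) < d -> a < t < b /\ derivable_pt_lim (fun s => / H s) t (g t) /\
     derivable_pt_lim g t (/ H t)).
  { intros t0 Ht0. set (d0 := Rmin (t0 - a) (b - t0)).
    assert (Hd0 : 0 < d0) by (apply Rmin_pos; lra).
    assert (IN : forall t, Rabs (t - t0) < d0 -> a < t < b).
    { intros t Ht. pose proof (Rmin_l (t0 - a) (b - t0)); pose proof (Rmin_r (t0 - a) (b - t0)).
      apply Rabs_def2 in Ht. fold d0 in H0, H1. lra. }
    destruct (PT _ _ (Hc t0 Ht0)) as (hb0&hd0&hf0).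
    assert (LN : LL (fuu (cu t0) (cv t0)) (n (cu t0) (cv t0)) <> 0 \/
                 NN (fvv (cu t0) (cv t0)) (n (cu t0) (cv t0)) <> 0).
    { destruct (Req_dec (LL (fuu (cu t0) (cv t0)) (n (cu t0) (cv t0))) 0) as [hL|hL]; auto.
      destruct (Req_dec (NN (fvv (cu t0) (cv t0)) (n (cu t0) (cv t0))) 0) as [hN|hN]; auto.
      exfalso. apply (Hnu t0 Ht0). exists 0.
      rewrite hL, hN in hf0. assert (hM : MM (fuv (cu t0) (cv t0)) (n (cu t0) (cv t0)) = 0) by nra.
      rewrite hL, hN, hM. repeat split; ring. }
    destruct LN as [hL|hN].
    -
      pose proof (proj1 (pt_pos_L _ _ _ _ _ _ _ _ _ hb0 hd0 hf0) hL) as Pos0.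
      destruct (finish H P T Nc (fun s => nu (cu s) (cv s)) (fun s => nuu (cu s) (cv s)) t0 d0
        (vlin (cu' t0) (nuu (cu t0) (cv t0)) (cv' t0) (nuv (cu t0) (cv t0))) Hd0) as [d [Hd [Hdd [g Hg]]]].
      + apply (vchain U nu nuu nuv cu cv t0); auto. apply vsmooth_cont; auto.
      + exact Pos0.
      + intros t Ht. pose proof (IN t Ht) as Ht'. pose proof (Hc t Ht') as Hct.
        destruct (COM t Ht') as (c1&c2&c3&c4&c5&c6&c7&c8&c9).
        destruct (CUR t Ht') as (k1&k2&k3).
        destruct (PT _ _ Hct) as (hb&hd&hf).
        do 9 (split; [assumption|]).
        split; [unfold P; rewrite mdot_sym; apply F4u; auto|].
        split; [exact k2|].
        split; [unfold Nc; rewrite mdot_sym; apply F3u; auto|].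
        intro Pos. split.
        * apply (npart U nu nv nuu nuv nvu nuuu nuuv nvuu cu cv (cu' t) (cv' t) t); auto;
            try (apply vsmooth_cont; auto).
        * pose proof (proj2 (pt_pos_L _ _ _ _ _ _ _ _ _ hb hd hf) Pos) as hLt.
          pose proof (pt_H_L _ _ _ _ _ _ _ _ _ hb hd hf hLt) as HL.
          unfold P. rewrite F11 by auto. unfold H, Hmean. cbv beta. rewrite HL.
          rewrite HL in Pos. unfold LL, MM, NN in *.
          set (L := mdot (fuu (cu t) (cv t)) (n (cu t) (cv t))) in *.
          set (Hm := (EE (fu (cu t) (cv t)) (fv (cu t) (cv t)) * mdot (fvv (cu t) (cv t)) (n (cu t) (cv t)) -
             2 * FF (fu (cu t) (cv t)) (fv (cu t) (cv t)) * mdot (fuv (cu t) (cv t)) (n (cu t) (cv t)) +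
             GG (fu (cu t) (cv t)) (fv (cu t) (cv t)) * L) /
            (2 * (EE (fu (cu t) (cv t)) (fv (cu t) (cv t)) * GG (fu (cu t) (cv t)) (fv (cu t) (cv t)) -
                  FF (fu (cu t) (cv t)) (fv (cu t) (cv t)) ^ 2))) in *.
          assert (Hm <> 0) by (intro Z; rewrite Z in Pos; lra).
          field. auto.
      + exists d. split; auto. exists g. intros t Ht.
        split; [apply IN; lra|]. apply Hg; auto.
    -
      pose proof (proj1 (pt_pos_N _ _ _ _ _ _ _ _ _ hb0 hd0 hf0) hN) as Pos0.
      destruct (finish H P T Nc (fun s => nv (cu s) (cv s)) (fun s => nvv (cu s) (cv s)) t0 d0
        (vlin (cu' t0) (nvu (cu t0) (cv t0)) (cv' t0) (nvv (cu t0) (cv t0))) Hd0) as [d [Hd [Hdd [g Hg]]]].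
      + apply (vchain U nv nvu nvv cu cv t0); auto. apply vsmooth_cont; auto.
      + exact Pos0.
      + intros t Ht. pose proof (IN t Ht) as Ht'. pose proof (Hc t Ht') as Hct.
        destruct (COM t Ht') as (c1&c2&c3&c4&c5&c6&c7&c8&c9).
        destruct (CUR t Ht') as (k1&k2&k3).
        destruct (PT _ _ Hct) as (hb&hd&hf).
        do 9 (split; [assumption|]).
        split; [unfold P; rewrite mdot_sym; apply F4v; auto|].
        split; [exact k3|].
        split; [unfold Nc; rewrite mdot_sym; apply F3v; auto|].
        intro Pos. split.
        * destruct (npart (swU U) (sw nv) (sw nu) (sw nvv) (sw nvu) (sw nuv) (sw nvvv) (sw nvvu) (sw nuvv)
            cv cu (cv' t) (cu' t) t) as [al [be [E1 E2]]].
          -- apply open2_sw; auto.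
          -- apply vpu_sw; auto.
          -- apply vpv_sw; auto.
          -- apply vpu_sw; auto.
          -- apply vpu_sw; auto.
          -- apply vpv_sw; auto.
          -- apply vpu_sw; auto.
          -- apply vcont_sw, vsmooth_cont; auto.
          -- apply vcont_sw, vsmooth_cont; auto.
          -- intros u v Huv. unfold sw. symmetry. apply S1. exact Huv.
          -- intros u v Huv. unfold sw. apply S2v. exact Huv.
          -- intros u v Huv. unfold sw. apply wedge_anti, Wg. exact Huv.
          -- exact Hct.
          -- apply Dcv; auto.
          -- apply Dcu; auto.
          -- unfold sw. rewrite <- k1. apply v4_ext; unfold vlin, vadd, vscal; simpl; ring.
          -- exact Pos.
          -- exists al, be. split; [exact E1|exact E2].
        * pose proof (proj2 (pt_pos_N _ _ _ _ _ _ _ _ _ hb hd hf) Pos) as hNt.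
          pose proof (pt_H_N _ _ _ _ _ _ _ _ _ hb hd hf hNt) as HN.
          unfold P. rewrite F12 by auto. unfold H, Hmean. cbv beta. rewrite HN.
          rewrite HN in Pos. unfold LL, MM, NN in *.
          set (N0 := mdot (fvv (cu t) (cv t)) (n (cu t) (cv t))) in *.
          set (Hm := (EE (fu (cu t) (cv t)) (fv (cu t) (cv t)) * N0 -
             2 * FF (fu (cu t) (cv t)) (fv (cu t) (cv t)) * mdot (fuv (cu t) (cv t)) (n (cu t) (cv t)) +
             GG (fu (cu t) (cv t)) (fv (cu t) (cv t)) * mdot (fuu (cu t) (cv t)) (n (cu t) (cv t))) /
            (2 * (EE (fu (cu t) (cv t)) (fv (cu t) (cv t)) * GG (fu (cu t) (cv t)) (fv (cu t) (cv t)) -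
                  FF (fu (cu t) (cv t)) (fv (cu t) (cv t)) ^ 2))) in *.
          assert (Hm <> 0) by (intro Z; rewrite Z in Pos; lra).
          field. auto.
      + exists d. split; auto. exists g. intros t Ht.
        split; [apply IN; lra|]. apply Hg; auto. }
  split.
  - intros t Ht. destruct (PT _ _ (Hc t Ht)) as (hb0&hd0&hf0).
    assert (LN : LL (fuu (cu t) (cv t)) (n (cu t) (cv t)) <> 0 \/
                 NN (fvv (cu t) (cv t)) (n (cu t) (cv t)) <> 0).
    { destruct (Req_dec (LL (fuu (cu t) (cv t)) (n (cu t) (cv t))) 0) as [hL|hL]; auto.
      destruct (Req_dec (NN (fvv (cu t) (cv t)) (n (cu t) (cv t))) 0) as [hN|hN]; auto.
      exfalso. apply (Hnu t Ht). exists 0.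
      rewrite hL, hN in hf0. assert (hM : MM (fuv (cu t) (cv t)) (n (cu t) (cv t)) = 0) by nra.
      rewrite hL, hN, hM. repeat split; ring. }
    intro Z. unfold H, Hmean in Z. cbv beta in Z.
    destruct LN as [hL|hN].
    + pose proof (proj1 (pt_pos_L _ _ _ _ _ _ _ _ _ hb0 hd0 hf0) hL) as Pos.
      pose proof (pt_H_L _ _ _ _ _ _ _ _ _ hb0 hd0 hf0 hL) as HL.
      rewrite Z in HL. lra.
    + pose proof (proj1 (pt_pos_N _ _ _ _ _ _ _ _ _ hb0 hd0 hf0) hN) as Pos.
      pose proof (pt_H_N _ _ _ _ _ _ _ _ _ hb0 hd0 hf0 hN) as HN.
      rewrite Z in HN. lra.
  - set (h' := fun t => epsilon (inhabits 0) (fun l => derivable_pt_lim (fun s => / H s) t l)).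
    assert (Hh' : forall t, a < t < b -> derivable_pt_lim (fun s => / H s) t (h' t)).
    { intros t Ht. destruct (LOC t Ht) as [d [Hd [g Hg]]].
      unfold h'. apply (epsilon_spec (inhabits 0) (fun l => derivable_pt_lim (fun s => / H s) t l)).
      exists (g t). apply Hg. replace (t - t) with 0 by ring. rewrite Rabs_R0; auto. }
    exists h'. intros t Ht. split; [auto|].
    destruct (LOC t Ht) as [d [Hd [g Hg]]].
    apply dpl_local with g d; auto.
    + intros y Hy. destruct (Hg y Hy) as [Hy1 [Hy2 _]].
      eapply uniqueness_limite; [apply Hh'; auto|exact Hy2].
    + apply Hg. replace (t - t) with 0 by ring. rewrite Rabs_R0; auto.
Qed.
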